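(* $\mathbf{FP}\subseteq\mathbf{FPC}$: every total function $f:\mathbb Z^m\to\mathbb Z$ computable by a deterministic Turing machine in time polynomial in the total binary length of its input is computed by some well-typed CorePolyC program.
   Context: CorePolyC. Types are $\mathtt{iint},\mathtt{int},\mathtt{bool}$; $\mathsf{Int}=\{\mathtt{iint},\mathtt{int}\}$, ordered by $\mathtt{iint}\preccurlyeq\mathtt{int}$. Values are unbounded integers ($\mathbb Z$) and booleans $\#t,\#f$. Expressions: variables $x$; constants (nonempty decimal digit strings denoting natural numbers; $\mathtt{true}$, $\mathtt{false}$); operator applications $\mathtt{op}(e_1,\dots,e_m)$; parenthesized $(e)$. Operators and semantics: unary $-$ (negation); binary $+,-,/,\%$ (integer addition, subtraction, division, remainder, with division and remainder by $0$ returning $0$); $\mathtt{size}$, with $\mathtt{size}(v)=\lceil\log_2(\mathrm{abs}(v)+1)\rceil$; comparisons $\texttt{>=},\texttt{<=},\texttt{>},\texttt{<},\texttt{==},\texttt{!=}$ on integers returning booleans; boolean $\texttt{!},\texttt{\&\&},\texttt{||}$. Statements: declaration $t\ x;$; assignment $x=e;$; block $\{s_1\dots s_m\}$; conditional $\mathbf{if}(e)\ s_1\ \mathbf{else}\ s_2$; loop $\mathbf{for}(x<\mathtt{size}(e))\ s$ (loop bounds are always syntactically of the form $\mathtt{size}(e)$). A program is $\mathbf{int\ main}(\mathbf{int}\ x_1,\dots,\mathbf{int}\ x_m)\{s_1\dots s_k\ \mathbf{return}\ e;\}$. Semantics (big-step). A store $\Sigma$ is a finite partial map from variables to values; $\Sigma[x\mapsto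 v]$ is the update. $\Sigma\vdash e\Downarrow v$: a variable $x\in\mathrm{dom}\,\Sigma$ evaluates to $\Sigma(x)$, constants to their value, $\mathtt{op}(e_1,\dots,e_m)$ to $\mathtt{op}$ applied to the values of the $e_i$. $\Sigma\vdash s\Downarrow\Sigma'$: $t\ x;$ gives $\Sigma[x\mapsto 0]$ if $t\in\mathsf{Int}$ and $\Sigma[x\mapsto\#f]$ if $t=\mathtt{bool}$; $x=e;$ (with $x\in\mathrm{dom}\,\Sigma$) gives $\Sigma[x\mapsto v]$ where $\Sigma\vdash e\Downarrow v$; a sequence or block executes its statements in order threading the store (a block returns the final store); a conditional evaluates its guard to a boolean and executes the corresponding branch; $\mathbf{for}(x<e)\ s$ evaluates $e$ once to an integer $i$, sets $\Sigma_0=\Sigma$, executes $s$ from $\Sigma_j[x\mapsto j]$ obtaining $\Sigma_{j+1}$ for $j=0,\dots,i-1$, and ends in $\Sigma_i$ (i.e. in $\Sigma$ if $i\le 0$). A program on inputs $v_1,\dots,v_m$ runs its statements from the store $[x_1\mapsto v_1,\dots,x_m\mapsto v_m]$ and outputs the value of its return expression in the resulting store. Type system. A typing environment $\Gamma$ is a finite partial map from variables to types; $\ell\in\{\#t,\#f\}$ is the loop indicator. Expression typing $\Gamma,\ell\vdash e:t$: a variable $x\in\mathrm{dom}\,\Gamma$ has type $\Gamma(x)$; digit literals have type $\mathtt{iint}$, $\mathtt{true},\mathtt{false}$ have type $\mathtt{bool}$; $\texttt{!},\texttt{\&\&},\texttt{||}$ take $\mathtt{bool}$ arguments to $\mathtt{bool}$;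 comparisons take arguments with types in $\mathsf{Int}$ to $\mathtt{bool}$; $+,-,/,\%$ take arguments with types in $\mathsf{Int}$ to their supremum under $\preccurlyeq$ ($\mathtt{iint}$ iff all arguments are $\mathtt{iint}$); $\mathtt{size}$ takes only an $\mathtt{iint}$ argument, giving $\mathtt{iint}$; parentheses preserve types. Statement typing $\Gamma,\ell\vdash s:\Gamma'$: $t\ x;$ is typable iff $x\notin\mathrm{dom}\,\Gamma$ and not($\ell=\#t$ and $t=\mathtt{iint}$), giving $\Gamma[x\mapsto t]$; $x=e;$ is typable iff $x\in\mathrm{dom}\,\Gamma$, not($\ell=\#t$ and $\Gamma(x)=\mathtt{iint}$), and $\Gamma,\ell\vdash e:t$ with $t,\Gamma(x)$ both in $\mathsf{Int}$ or both $\mathtt{bool}$, giving $\Gamma$; a sequence $s_1\dots s_m$ threads $\Gamma_0=\Gamma$, $\Gamma_{i-1},\ell\vdash s_i:\Gamma_i$, giving $\Gamma_m$; a block $\{\tilde s\}$ is typable if its sequence is, giving $\Gamma$; a conditional needs a guard of type $\mathtt{bool}$ and both branches typable under $\Gamma,\ell$, giving $\Gamma$; $\mathbf{for}(x<e)\ s$ needs $\Gamma,\ell\vdash e:\mathtt{iint}$, $x\notin\mathrm{dom}\,\Gamma$, and $\Gamma[x\mapsto\mathtt{iint}],\#t\vdash s:\Gamma'$ for some $\Gamma'$, giving $\Gamma$. A program is well-typed if its statements are typable starting from $[x_1\mapsto\mathtt{int},\dots,x_m\mapsto\mathtt{int}]$ with $\ell=\#f$, ending in some $\Gamma'$, and its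 return expression has a type in $\mathsf{Int}$ under $\Gamma',\#f$. A well-typed program $p$ with $m$ inputs computes a total function $[\![p]\!]:\mathbb Z^m\to\mathbb Z$; $\mathbf{FPC}$ is the set of all such functions. $\mathbf{FP}$ is the class of total functions $\mathbb Z^m\to\mathbb Z$ ($m\ge0$) computable by a deterministic Turing machine in time polynomial in the total binary length of the input. *)

(* Defs.v *)
From Stdlib Require Import ZArith List.
Import ListNotations.
Open Scope Z_scope.

Inductive ty : Type := TIint | TInt | TBool.

Definition is_int (t : ty) : Prop := t = TIint \/ t = TInt.

Definition ty_sup (a b : ty) : ty :=
  match a, b with TIint, TIint => TIint | _, _ => TInt end.

Inductive op : Type :=
  | ONeg
  | OAdd | OSub | ODiv | OMod
  | OSize
  | OGe | OLe | OGt | OLt | OEq | ONe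
  | ONot | OAnd | OOr.

Definition var := nat.

Inductive expr : Type :=
  | EVar (x : var)
  | ENum (n : nat)
  | ETrue
  | EFalse
  | EOp (o : op) (es : list expr)
  | EParen (e : expr).

Inductive stmt : Type :=
  | SDecl (t : ty) (x : var)
  | SAssign (x : var) (e : expr)
  | SBlock (ss : list stmt)
  | SIf (e : expr) (s1 s2 : stmt)
  | SFor (x : var) (e : expr) (s : stmt).   (* for (x < size(e)) s *)

Record program : Type := mkProgram {
  params : list var;
  body : list stmt;
  ret : expr }.

Inductive value : Type := VInt (z : Z) | VBool (b : bool).

Definition store := var -> option value.
Definition empty_store : store := fun _ => None.
Definition upd {A : Type} (S : var -> option A) (x : var) (v : A) : var -> option A :=
  fun y => if Nat.eqb y x then Some v else S y.

Definition zsize (v : Z) : Z := Z.log2_up (Z.abs v + 1).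

(* integer division/remainder (C-style truncation), 0 when the divisor is 0 *)
Definition zdiv0 (a b : Z) : Z := if Z.eqb b 0 then 0 else Z.quot a b.
Definition zmod0 (a b : Z) : Z := if Z.eqb b 0 then 0 else Z.rem a b.

Definition op_sem (o : op) (vs : list value) : option value :=
  match o, vs with
  | ONeg, [VInt a] => Some (VInt (- a))
  | OAdd, [VInt a; VInt b] => Some (VInt (a + b))
  | OSub, [VInt a; VInt b] => Some (VInt (a - b))
  | ODiv, [VInt a; VInt b] => Some (VInt (zdiv0 a b))
  | OMod, [VInt a; VInt b] => Some (VInt (zmod0 a b))
  | OSize, [VInt a] => Some (VInt (zsize a))
  | OGe, [VInt a; VInt b] => Some (VBool (b <=? a))
  | OLe, [VInt a; VInt b] => Some (VBool (a <=? b))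
  | OGt, [VInt a; VInt b] => Some (VBool (b <? a))
  | OLt, [VInt a; VInt b] => Some (VBool (a <? b))
  | OEq, [VInt a; VInt b] => Some (VBool (a =? b))
  | ONe, [VInt a; VInt b] => Some (VBool (negb (a =? b)))
  | ONot, [VBool a] => Some (VBool (negb a))
  | OAnd, [VBool a; VBool b] => Some (VBool (a && b))
  | OOr, [VBool a; VBool b] => Some (VBool (a || b))
  | _, _ => None
  end.

Inductive eval (S : store) : expr -> value -> Prop :=
  | E_Var x v : S x = Some v -> eval S (EVar x) v
  | E_Num n : eval S (ENum n) (VInt (Z.of_nat n))
  | E_True : eval S ETrue (VBool true)
  | E_False : eval S EFalse (VBool false)
  | E_Op o es vs v :
      Forall2 (eval S) es vs -> op_sem o vs = Some v -> eval S (EOp o es) v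
  | E_Paren e v : eval S e v -> eval S (EParen e) v.

Definition default_value (t : ty) : value :=
  match t with TBool => VBool false | _ => VInt 0 end.

Inductive exec : store -> stmt -> store -> Prop :=
  | X_Decl S t x : exec S (SDecl t x) (upd S x (default_value t))
  | X_Assign S x e v :
      S x <> None -> eval S e v -> exec S (SAssign x e) (upd S x v)
  | X_Block S ss S' : exec_seq S ss S' -> exec S (SBlock ss) S'
  | X_IfT S e s1 s2 S' :
      eval S e (VBool true) -> exec S s1 S' -> exec S (SIf e s1 s2) S'
  | X_IfF S e s1 s2 S' :
      eval S e (VBool false) -> exec S s2 S' -> exec S (SIf e s1 s2) S'
  | X_For S x e s i S' :
      eval S (EOp OSize [e]) (VInt i) -> exec_loop x s 0 i S S' ->
      exec S (SFor x e s) S'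
with exec_seq : store -> list stmt -> store -> Prop :=
  | XS_Nil S : exec_seq S [] S
  | XS_Cons S s ss S1 S2 : exec S s S1 -> exec_seq S1 ss S2 -> exec_seq S (s :: ss) S2
(* exec_loop x s j i S S' : iterations j, ..., i-1 of the loop body *)
with exec_loop : var -> stmt -> Z -> Z -> store -> store -> Prop :=
  | XL_Done x s j i S : i <= j -> exec_loop x s j i S S
  | XL_Step x s j i S S1 S' :
      j < i -> exec (upd S x (VInt j)) s S1 -> exec_loop x s (j + 1) i S1 S' ->
      exec_loop x s j i S S'.

Definition tenv := var -> option ty.

Definition op_ty (o : op) (ts : list ty) : option ty :=
  match o, ts with
  | ONot, [TBool] => Some TBool
  | (OAnd | OOr), [TBool; TBool] => Some TBool
  | (OGe | OLe | OGt | OLt | OEq | ONe), [a; b] =>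
      match a, b with TBool, _ | _, TBool => None | _, _ => Some TBool end
  | ONeg, [a] => match a with TBool => None | _ => Some a end
  | (OAdd | OSub | ODiv | OMod), [a; b] =>
      match a, b with TBool, _ | _, TBool => None | _, _ => Some (ty_sup a b) end
  | OSize, [TIint] => Some TIint
  | _, _ => None
  end.

(* expression typing (the loop indicator plays no role for expressions) *)
Inductive expr_ty (G : tenv) : expr -> ty -> Prop :=
  | T_Var x t : G x = Some t -> expr_ty G (EVar x) t
  | T_Num n : expr_ty G (ENum n) TIint
  | T_True : expr_ty G ETrue TBool
  | T_False : expr_ty G EFalse TBool
  | T_Op o es ts t :
      Forall2 (expr_ty G) es ts -> op_ty o ts = Some t -> expr_ty G (EOp o es) t
  | T_Paren e t : expr_ty G e t -> expr_ty G (EParen e) t.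

Definition compatible (a b : ty) : Prop :=
  (is_int a /\ is_int b) \/ (a = TBool /\ b = TBool).

Inductive stmt_ty : tenv -> bool -> stmt -> tenv -> Prop :=
  | TS_Decl G l t x :
      G x = None -> ~ (l = true /\ t = TIint) ->
      stmt_ty G l (SDecl t x) (upd G x t)
  | TS_Assign G l x e tx te :
      G x = Some tx -> ~ (l = true /\ tx = TIint) -> expr_ty G e te ->
      compatible te tx -> stmt_ty G l (SAssign x e) G
  | TS_Block G l ss G' : seq_ty G l ss G' -> stmt_ty G l (SBlock ss) G
  | TS_If G l e s1 s2 G1 G2 :
      expr_ty G e TBool -> stmt_ty G l s1 G1 -> stmt_ty G l s2 G2 ->
      stmt_ty G l (SIf e s1 s2) G
  | TS_For G l x e s G' :
      expr_ty G (EOp OSize [e]) TIint -> G x = None ->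
      stmt_ty (upd G x TIint) true s G' -> stmt_ty G l (SFor x e s) G
with seq_ty : tenv -> bool -> list stmt -> tenv -> Prop :=
  | TQ_Nil G l : seq_ty G l [] G
  | TQ_Cons G l s ss G1 G2 :
      stmt_ty G l s G1 -> seq_ty G1 l ss G2 -> seq_ty G l (s :: ss) G2.

Definition init_env (xs : list var) : tenv :=
  fold_right (fun x G => upd G x TInt) (fun _ => None) xs.

Definition init_store (xs : list var) (vs : list Z) : store :=
  fold_right (fun xv S => upd S (fst xv) (VInt (snd xv))) empty_store (combine xs vs).

Definition well_typed (p : program) : Prop :=
  NoDup (params p) /\
  exists G', seq_ty (init_env (params p)) false (body p) G' /\
             exists t, expr_ty G' (ret p) t /\ is_int t.

(* p computes f : Z^m -> Z (f given on lists, only lists of length m matter) *)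
Definition prog_computes (p : program) (m : nat) (f : list Z -> Z) : Prop :=
  length (params p) = m /\
  forall vs : list Z, length vs = m ->
    exists S', exec_seq (init_store (params p) vs) (body p) S' /\
               eval S' (ret p) (VInt (f vs)).

Definition in_FPC (m : nat) (f : list Z -> Z) : Prop :=
  exists p, well_typed p /\ prog_computes p m f.

Inductive move : Type := MLeft | MRight | MStay.

(* Deterministic single-tape TM with states {0..nstates-1} and tape symbols
   {0..nsymbols-1}; symbol 0 is the blank, 1 = bit 0, 2 = bit 1, 3 = minus
   sign, 4 = argument separator. delta q a = None means q halts on a. *)
Record TM : Type := mkTM {
  nstates : nat;
  nsymbols : nat;
  start : nat;
  delta : nat -> nat -> option (nat * nat * move) }.

Definition TM_wf (M : TM) : Prop :=
  (5 <= nsymbols M)%nat /\ (start M < nstates M)%nat /\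
  forall q a q' a' d, (q < nstates M)%nat -> (a < nsymbols M)%nat ->
    delta M q a = Some (q', a', d) -> (q' < nstates M)%nat /\ (a' < nsymbols M)%nat.

Record config : Type := mkConfig { cstate : nat; ctape : Z -> nat; cpos : Z }.

Definition step (M : TM) (c : config) : option config :=
  match delta M (cstate c) (ctape c (cpos c)) with
  | None => None
  | Some (q', a, d) =>
      Some (mkConfig q'
              (fun z => if Z.eqb z (cpos c) then a else ctape c z)
              (cpos c + match d with MLeft => -1 | MRight => 1 | MStay => 0 end))
  end.

Fixpoint run (M : TM) (n : nat) (c : config) : config :=
  match n with
  | O => c
  | S n' => match step M c with None => c | Some c' => run M n' c' end
  end.

(* binary digits of a natural number, most significant first (0 |-> [bit0]) *)
Definition bits_pos (p : positive) : list nat :=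
  let fix go (p : positive) (acc : list nat) :=
    match p with
    | xH => 2%nat :: acc
    | xO p' => go p' (1%nat :: acc)
    | xI p' => go p' (2%nat :: acc)
    end in go p [].

Definition enc_Z (z : Z) : list nat :=
  match z with
  | Z0 => [1%nat]
  | Zpos p => bits_pos p
  | Zneg p => 3%nat :: bits_pos p
  end.

Fixpoint enc_input (vs : list Z) : list nat :=
  match vs with
  | [] => []
  | [v] => enc_Z v
  | v :: vs' => enc_Z v ++ 4%nat :: enc_input vs'
  end.

Definition init_config (M : TM) (w : list nat) : config :=
  mkConfig (start M)
           (fun z => if Z.ltb z 0 then 0%nat else nth (Z.to_nat z) w 0%nat)
           0.

Definition output_is (c : config) (out : list nat) : Prop :=
  (forall i, (i < length out)%nat -> ctape c (cpos c + Z.of_nat i) = nth i out 0%nat) /\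
  ctape c (cpos c + Z.of_nat (length out)) = 0%nat.

Definition in_FP (m : nat) (f : list Z -> Z) : Prop :=
  exists (M : TM) (c k : nat), TM_wf M /\
    forall vs : list Z, length vs = m ->
      let w := enc_input vs in
      exists t : nat, (t <= c * (length w + 1) ^ k)%nat /\
        let cf := run M t (init_config M w) in
        step M cf = None /\ output_is cf (enc_Z (f vs)).

(* Main.v *)
Require Import Defs.
From Stdlib Require Import ZArith List Lia.
Import ListNotations.
Open Scope Z_scope.

Lemma upd_eq {A} (S : var -> option A) x v : upd S x v x = Some v.
Proof. unfold upd. rewrite Nat.eqb_refl. reflexivity. Qed.
Lemma upd_neq {A} (S : var -> option A) x v y : x <> y -> upd S x v y = S y.
Proof. intro H. unfold upd. destruct (Nat.eqb_spec y x); [congruence|reflexivity]. Qed.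

Ltac look := repeat (rewrite upd_eq || (rewrite upd_neq by lia)); first [reflexivity | eassumption].

Definition eadd a b := EOp OAdd [a; b].
Definition esub a b := EOp OSub [a; b].
Definition ediv a b := EOp ODiv [a; b].
Definition emod a b := EOp OMod [a; b].
Definition eeq a b := EOp OEq [a; b].
Definition elt a b := EOp OLt [a; b].
Definition eand a b := EOp OAnd [a; b].
Fixpoint mulc (e : expr) (k : nat) : expr :=
  match k with O => ENum 0 | S k' => eadd e (mulc e k') end.

Lemma ev_var S x z : S x = Some (VInt z) -> eval S (EVar x) (VInt z).
Proof. apply E_Var. Qed.
Lemma ev_num S n z : z = Z.of_nat n -> eval S (ENum n) (VInt z).
Proof. intros ->; constructor. Qed.
Lemma ev_bin S o a b x y v : eval S a (VInt x) -> eval S b (VInt y) ->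
  op_sem o [VInt x; VInt y] = Some v -> eval S (EOp o [a; b]) v.
Proof. intros. econstructor; eauto. Qed.
Lemma ev_add S a b x y z : eval S a (VInt x) -> eval S b (VInt y) -> z = x + y -> eval S (eadd a b) (VInt z).
Proof. intros ? ? ->. eapply ev_bin; eauto. Qed.
Lemma ev_sub S a b x y z : eval S a (VInt x) -> eval S b (VInt y) -> z = x - y -> eval S (esub a b) (VInt z).
Proof. intros ? ? ->. eapply ev_bin; eauto. Qed.
Lemma ev_div S a b x y z : eval S a (VInt x) -> eval S b (VInt y) -> 0 <= x -> 0 < y -> z = x / y -> eval S (ediv a b) (VInt z).
Proof. intros ? ? ? ? ->. eapply ev_bin; eauto. simpl. unfold zdiv0.
  rewrite (proj2 (Z.eqb_neq y 0)) by lia. rewrite Z.quot_div_nonneg by lia. reflexivity. Qed.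
Lemma ev_mod S a b x y z : eval S a (VInt x) -> eval S b (VInt y) -> 0 <= x -> 0 < y -> z = x mod y -> eval S (emod a b) (VInt z).
Proof. intros ? ? ? ? ->. eapply ev_bin; eauto. simpl. unfold zmod0.
  rewrite (proj2 (Z.eqb_neq y 0)) by lia. rewrite Z.rem_mod_nonneg by lia. reflexivity. Qed.
Lemma ev_eq S a b x y : eval S a (VInt x) -> eval S b (VInt y) -> eval S (eeq a b) (VBool (x =? y)).
Proof. intros. eapply ev_bin; eauto. Qed.
Lemma ev_lt S a b x y : eval S a (VInt x) -> eval S b (VInt y) -> eval S (elt a b) (VBool (x <? y)).
Proof. intros. eapply ev_bin; eauto. Qed.
Lemma ev_and S a b x y : eval S a (VBool x) -> eval S b (VBool y) -> eval S (eand a b) (VBool (x && y)).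
Proof. intros. econstructor; eauto. Qed.
Lemma ev_mulc S e v k z : eval S e (VInt v) -> z = Z.of_nat k * v -> eval S (mulc e k) (VInt z).
Proof. intros H ->. induction k; cbn [mulc].
  - apply ev_num. lia.
  - eapply ev_add; [exact H | exact IHk | lia]. Qed.

Ltac evl := repeat first
  [ apply ev_var; look
  | eapply ev_num; reflexivity
  | eapply ev_add | eapply ev_sub | eapply ev_mulc ].

Lemma exec_assign S x e v : S x <> None -> eval S e v -> exec S (SAssign x e) (upd S x v).
Proof. intros; constructor; auto. Qed.

Lemma exseq_app S l1 S1 l2 S2 : exec_seq S l1 S1 -> exec_seq S1 l2 S2 -> exec_seq S (l1 ++ l2) S2.
Proof. induction 1; simpl; auto. intros. econstructor; eauto. Qed.

Lemma loop_run x s i (P : Z -> store -> Prop) :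
  (forall j S, 0 <= j < i -> P j S -> exists S1, exec (upd S x (VInt j)) s S1 /\ P (j+1) S1) ->
  forall n j S, Z.of_nat n = i - j -> 0 <= j -> P j S -> exists S', exec_loop x s j i S S' /\ P i S'.
Proof. intros Hs n. induction n; intros j S Hn Hj HP.
  - exists S. split. constructor. lia. replace i with j by lia. auto.
  - destruct (Hs j S) as [S1 [H1 H2]]; [lia|auto|].
    destruct (IHn (j+1) S1) as [S' [H3 H4]]; [lia|lia|auto|].
    exists S'. split; auto. econstructor; eauto. lia. Qed.

Lemma exec_for S x e s y (P : Z -> store -> Prop) :
  eval S e (VInt y) -> P 0 S ->
  (forall j S, 0 <= j < zsize y -> P j S -> exists S1, exec (upd S x (VInt j)) s S1 /\ P (j+1) S1) ->
  exists S', exec S (SFor x e s) S' /\ P (zsize y) S'.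
Proof. intros He H0 Hs.
  destruct (loop_run x s (zsize y) P Hs (Z.to_nat (zsize y)) 0 S) as [S' [H1 H2]]; auto.
  - unfold zsize. pose proof (Z.log2_up_nonneg (Z.abs y + 1)). lia.
  - lia.
  - exists S'. split; auto. econstructor; eauto. econstructor. repeat constructor; eauto. reflexivity. Qed.

Definition Decl (S : store) := forall v, (v < 12)%nat -> S v <> None.
Lemma Decl_upd S x v : Decl S -> Decl (upd S x v).
Proof. unfold Decl, upd. intros H y Hy. destruct (Nat.eqb y x); [discriminate|auto]. Qed.

Lemma decl_some S x : Decl S -> (x < 12)%nat -> S x <> None.
Proof. auto. Qed.

Ltac run1 := match goal with
 | |- exec_seq _ [] _ => apply XS_Nil
 | |- exec_seq _ (_ :: _) _ => eapply XS_Cons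
 | |- exec _ (SBlock _) _ => apply X_Block
 | |- exec _ (SAssign _ _) _ => apply exec_assign; [ eapply decl_some; [repeat apply Decl_upd; eassumption | lia] | ]
 end.

Ltac evl3 := repeat first
  [ apply ev_var; look
  | eapply ev_num; reflexivity
  | eapply ev_add | eapply ev_sub | eapply ev_mulc | eapply ev_div | eapply ev_mod
  | match goal with |- ?z = _ => is_evar z; reflexivity end ].

Ltac stepa := eapply XS_Cons; [apply exec_assign; [eapply decl_some; [repeat apply Decl_upd; eassumption|lia] | evl3; try nia] | ].
Ltac lk := repeat (rewrite upd_eq || (rewrite upd_neq by lia)).
Lemma ev_eqb S a b x y c : eval S a (VInt x) -> eval S b (VInt y) -> c = (x =? y) -> eval S (eeq a b) (VBool c).
Proof. intros ? ? ->. apply ev_eq; auto. Qed.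
Lemma ev_ltb S a b x y c : eval S a (VInt x) -> eval S b (VInt y) -> c = (x <? y) -> eval S (elt a b) (VBool c).
Proof. intros ? ? ->. apply ev_lt; auto. Qed.
Lemma for_exec St x y s v St' : St y = Some (VInt v) -> exec_loop x s 0 (zsize v) St St' -> exec St (SFor x (EVar y) s) St'.
Proof. intros. econstructor; eauto. econstructor. repeat constructor; eauto. reflexivity. Qed.

Definition ity (G : tenv) e := exists t, expr_ty G e t /\ is_int t.

Lemma ity_var G x t : G x = Some t -> is_int t -> ity G (EVar x).
Proof. intros. exists t. split; auto. constructor; auto. Qed.
Lemma ity_num G n : ity G (ENum n).
Proof. exists TIint. split. constructor. left; auto. Qed.
Lemma ity_bin G o a b : In o [OAdd; OSub; ODiv; OMod] -> ity G a -> ity G b -> ity G (EOp o [a; b]).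
Proof. intros Ho [ta [Ha Hta]] [tb [Hb Htb]].
  exists (ty_sup ta tb). split.
  - econstructor. repeat constructor; eauto.
    destruct Hta as [->| ->], Htb as [->| ->];
    simpl in Ho; destruct Ho as [<-|[<-|[<-|[<-|[]]]]]; reflexivity.
  - destruct Hta as [->| ->], Htb as [->| ->]; simpl; unfold is_int; auto. Qed.
Lemma ity_add G a b : ity G a -> ity G b -> ity G (eadd a b).
Proof. apply ity_bin; simpl; auto. Qed.
Lemma ity_sub G a b : ity G a -> ity G b -> ity G (esub a b).
Proof. apply ity_bin; simpl; auto. Qed.
Lemma ity_div G a b : ity G a -> ity G b -> ity G (ediv a b).
Proof. apply ity_bin; simpl; auto. Qed.
Lemma ity_mod G a b : ity G a -> ity G b -> ity G (emod a b).
Proof. apply ity_bin; simpl; auto 6. Qed.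
Lemma ity_mulc G e k : ity G e -> ity G (mulc e k).
Proof. intros. induction k; cbn [mulc]. apply ity_num. apply ity_add; auto. Qed.
Lemma bty_cmp G o a b : In o [OEq; OLt] -> ity G a -> ity G b -> expr_ty G (EOp o [a; b]) TBool.
Proof. intros Ho [ta [Ha Hta]] [tb [Hb Htb]].
  econstructor. repeat constructor; eauto.
  destruct Hta as [->| ->], Htb as [->| ->];
  simpl in Ho; destruct Ho as [<-|[<-|[]]]; reflexivity. Qed.
Lemma bty_eq G a b : ity G a -> ity G b -> expr_ty G (eeq a b) TBool.
Proof. apply bty_cmp; simpl; auto. Qed.
Lemma bty_lt G a b : ity G a -> ity G b -> expr_ty G (elt a b) TBool.
Proof. apply bty_cmp; simpl; auto. Qed.
Lemma bty_and G a b : expr_ty G a TBool -> expr_ty G b TBool -> expr_ty G (eand a b) TBool.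
Proof. intros. econstructor. repeat constructor; eauto. all: try reflexivity. Qed.

Lemma sty_assign G l x e : G x = Some TInt -> ity G e -> stmt_ty G l (SAssign x e) G.
Proof. intros Hx [t [He Ht]]. econstructor; eauto. intros [_ H]; discriminate.
  left. split; [exact Ht | unfold is_int; auto]. Qed.
Lemma sty_assign_i G x e : G x = Some TIint -> ity G e -> stmt_ty G false (SAssign x e) G.
Proof. intros Hx [t [He Ht]]. econstructor; eauto. intros [H _]; discriminate.
  left. split; [exact Ht | unfold is_int; auto]. Qed.
Lemma seq_same G l ss : Forall (fun s => stmt_ty G l s G) ss -> seq_ty G l ss G.
Proof. induction 1. constructor. econstructor; eauto. Qed.
Lemma sty_block G l ss : Forall (fun s => stmt_ty G l s G) ss -> stmt_ty G l (SBlock ss) G.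
Proof. intros. econstructor. apply seq_same; eauto. Qed.
Lemma sty_skip G l : stmt_ty G l (SBlock []) G.
Proof. apply sty_block; constructor. Qed.
Lemma sty_if G l e s1 s2 : expr_ty G e TBool -> stmt_ty G l s1 G -> stmt_ty G l s2 G -> stmt_ty G l (SIf e s1 s2) G.
Proof. intros; econstructor; eauto. Qed.
Lemma sty_for G l x y s G' : G y = Some TIint -> G x = None ->
  stmt_ty (upd G x TIint) true s G' -> stmt_ty G l (SFor x (EVar y) s) G.
Proof. intros. econstructor; eauto. econstructor. repeat constructor; eauto. reflexivity. Qed.

Notation vQ := 0%nat. Notation vL := 1%nat. Notation vR := 2%nat. Notation vA := 3%nat.
Notation vT := 4%nat. Notation vP := 5%nat. Notation vD := 6%nat. Notation vV := 7%nat.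
Notation vNG := 8%nat. Notation vDN := 9%nat. Notation vOUT := 10%nat. Notation vY := 11%nat.

Fixpoint digit (B N : Z) (j : nat) : nat :=
  match j with O => Z.to_nat (N mod B) | S j' => digit B (N / B) j' end.

Lemma digit_0 B N d : 0 < B -> 0 <= d < B -> digit B (B * N + d) 0 = Z.to_nat d.
Proof. intros. simpl. f_equal. rewrite Z.add_comm, Z.mul_comm, Z.mod_add by lia. apply Z.mod_small; lia. Qed.
Lemma digit_S B N d j : 0 < B -> 0 <= d < B -> digit B (B * N + d) (S j) = digit B N j.
Proof. intros. simpl. f_equal. rewrite Z.add_comm, Z.mul_comm, Z.div_add by lia.
  rewrite Z.div_small by lia. lia. Qed.

Definition rep (B : Z) (c : config) (Lz Rz : Z) :=
  forall j : nat, ctape c (cpos c + Z.of_nat j) = digit B Rz j /\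
                  ctape c (cpos c - 1 - Z.of_nat j) = digit B Lz j.

Definition nextc (M : TM) (c : config) := match step M c with None => c | Some c' => c' end.

Section Step.
Variable M : TM.
Let B := nsymbols M.
Let Bz := Z.of_nat B.

Definition mv (d : move) : list stmt :=
  match d with
  | MRight => [SAssign vL (eadd (mulc (EVar vL) B) (emod (EVar vR) (ENum B)));
               SAssign vR (ediv (EVar vR) (ENum B))]
  | MLeft => [SAssign vR (eadd (mulc (EVar vR) B) (emod (EVar vL) (ENum B)));
              SAssign vL (ediv (EVar vL) (ENum B))]
  | MStay => []
  end.

Definition action (q a : nat) : stmt :=
  match delta M q a with
  | None => SBlock []
  | Some (q', a', d) =>
      SBlock ([SAssign vQ (ENum q'); SAssign vR (eadd (esub (EVar vR) (EVar vA)) (ENum a'))] ++ mv d)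
  end.

Fixpoint chain (l : list (nat * nat)) : stmt :=
  match l with
  | [] => SBlock []
  | (q, a) :: r => SIf (eand (eeq (EVar vQ) (ENum q)) (eeq (EVar vA) (ENum a))) (action q a) (chain r)
  end.

Definition STEP : stmt :=
  SBlock [SAssign vA (emod (EVar vR) (ENum B)); chain (list_prod (seq 0 (nstates M)) (seq 0 B))].

Lemma chain_ok l S q a S' : In (q, a) l -> S vQ = Some (VInt (Z.of_nat q)) ->
  S vA = Some (VInt (Z.of_nat a)) -> exec S (action q a) S' -> exec S (chain l) S'.
Proof. induction l as [|[q0 a0] l IH]; simpl; [tauto|]. intros Hin HQ HA Hx.
  assert (He : eval S (eand (eeq (EVar vQ) (ENum q0)) (eeq (EVar vA) (ENum a0)))
    (VBool ((Z.of_nat q =? Z.of_nat q0) && (Z.of_nat a =? Z.of_nat a0))%bool)).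
  { apply ev_and; apply ev_eq; (apply ev_var; assumption) || constructor. }
  destruct (Z.eqb_spec (Z.of_nat q) (Z.of_nat q0)); destruct (Z.eqb_spec (Z.of_nat a) (Z.of_nat a0)); simpl in He.
  - assert (q = q0) by lia; assert (a = a0) by lia; subst. apply X_IfT; auto.
  - apply X_IfF; auto. apply IH; auto. destruct Hin as [Hin|]; auto. inversion Hin; lia.
  - apply X_IfF; auto. apply IH; auto. destruct Hin as [Hin|]; auto. inversion Hin; lia.
  - apply X_IfF; auto. apply IH; auto. destruct Hin as [Hin|]; auto. inversion Hin; lia.
Qed.

Definition SimRep (c : config) (S : store) :=
  exists Lz Rz, S vQ = Some (VInt (Z.of_nat (cstate c))) /\ S vL = Some (VInt Lz) /\
    S vR = Some (VInt Rz) /\ 0 <= Lz /\ 0 <= Rz /\ rep Bz c Lz Rz /\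
    (cstate c < nstates M)%nat /\ Decl S.

End Step.

Lemma mod_lin B X d : 0 < B -> 0 <= d < B -> (B * X + d) mod B = d.
Proof. intros. rewrite Z.add_comm, Z.mul_comm, Z.mod_add by lia. apply Z.mod_small; lia. Qed.
Lemma div_lin B X d : 0 < B -> 0 <= d < B -> (B * X + d) / B = X.
Proof. intros. rewrite Z.add_comm, Z.mul_comm, Z.div_add by lia. rewrite Z.div_small by lia. lia. Qed.

Lemma step_ok M c St : TM_wf M -> SimRep M c St ->
  exists S1, exec St (STEP M) S1 /\ SimRep M (nextc M c) S1 /\ (forall v, (4 <= v)%nat -> S1 v = St v).
Proof.
  intros [HB [Hst Hwf]] (Lz & Rz & HQ & HL & HR & HL0 & HR0 & Hrep & Hq & HD).
  set (B := nsymbols M) in *.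
  assert (HBz : 5 <= (Z.of_nat B)) by lia.
  set (a := Z.to_nat (Rz mod (Z.of_nat B))).
  pose proof (Z.mod_pos_bound Rz (Z.of_nat B) ltac:(lia)) as Hmb.
  assert (Ha : ctape c (cpos c) = a).
  { destruct (Hrep 0%nat) as [H _]. simpl in H. rewrite Z.add_0_r in H. rewrite H. reflexivity. }
  assert (HaB : (a < B)%nat) by (unfold a; lia).
  set (S' := upd St vA (VInt (Z.of_nat a))).
  assert (HA : exec St (SAssign vA (emod (EVar vR) (ENum B))) S').
  { apply exec_assign. apply HD; lia. eapply ev_mod; [apply ev_var; eauto | constructor | lia | lia | ].
    unfold a. rewrite Z2Nat.id; lia. }
  assert (Hin : In (cstate c, a) (list_prod (seq 0 (nstates M)) (seq 0 B))).
  { apply in_prod; apply in_seq; lia. }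
  assert (HD' : Decl S') by (apply Decl_upd; auto).
  unfold nextc, step. rewrite Ha.
  destruct (delta M (cstate c) a) as [[[q' a'] d]|] eqn:Hd.
  2:{ exists S'. split; [|split].
      - apply X_Block. econstructor; [exact HA|]. econstructor; [|constructor].
        eapply chain_ok; eauto. all: try (unfold S'; look).
        unfold action. rewrite Hd. apply X_Block. constructor.
      - exists Lz, Rz. unfold S'. repeat split; auto; try look; apply Hrep.
      - intros v Hv. unfold S'. rewrite upd_neq by lia. auto. }
  destruct (Hwf _ _ _ _ _ Hq HaB Hd) as [Hq' Ha'].
  assert (HaZ : Z.of_nat a = Rz mod Z.of_nat B) by (unfold a; rewrite Z2Nat.id; lia).
  assert (HR1 : Rz - Z.of_nat a + Z.of_nat a' = Z.of_nat B * (Rz / Z.of_nat B) + Z.of_nat a').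
  { rewrite HaZ. pose proof (Z.div_mod Rz (Z.of_nat B) ltac:(lia)). lia. }
  assert (0 <= Rz / Z.of_nat B) by (apply Z.div_pos; lia).
  assert (0 <= Lz / Z.of_nat B) by (apply Z.div_pos; lia).
  destruct d.
  - eexists. split; [|split].
    + apply X_Block. econstructor; [exact HA|]. econstructor; [|constructor].
      eapply chain_ok; eauto. all: try (unfold S'; look).
      unfold action. rewrite Hd. apply X_Block. cbn [app mv].
      stepa. stepa. stepa. stepa. apply XS_Nil.
      all: try lia.
    + exists (Lz / Z.of_nat B), (Z.of_nat B * (Rz - Z.of_nat a + Z.of_nat a') + Lz mod Z.of_nat B).
      fold B. rewrite HR1. cbn [cstate].
      pose proof (Z.mod_pos_bound Lz (Z.of_nat B) ltac:(lia)) as HLm.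
      split; [look|]. split; [look|]. split; [look|]. split; [lia|]. split; [nia|].
      split; [|split; [lia| repeat apply Decl_upd; auto]].
      intro j. cbn [ctape cpos]. split.
      * destruct j as [|j].
        -- rewrite digit_0 by lia. destruct (Hrep 0%nat) as [_ H2].
           destruct (Z.eqb_spec (cpos c + -1 + Z.of_nat 0) (cpos c)); [lia|].
           replace (cpos c + -1 + Z.of_nat 0) with (cpos c - 1 - Z.of_nat 0) by lia. rewrite H2. reflexivity.
        -- rewrite digit_S by lia. destruct j as [|j].
           ++ rewrite digit_0 by lia. rewrite Nat2Z.id.
              destruct (Z.eqb_spec (cpos c + -1 + Z.of_nat 1) (cpos c)); [reflexivity|lia].
           ++ rewrite digit_S by lia. destruct (Hrep (S (S j))) as [H1 _].
              destruct (Z.eqb_spec (cpos c + -1 + Z.of_nat (S (S j))) (cpos c)); [lia|].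
              replace (cpos c + -1 + Z.of_nat (S (S j))) with (cpos c + Z.of_nat (S j)) by lia.
              destruct (Hrep (S j)) as [H3 _]. rewrite H3. reflexivity.
      * destruct (Hrep (S j)) as [_ H2].
        destruct (Z.eqb_spec (cpos c + -1 - 1 - Z.of_nat j) (cpos c)); [lia|].
        replace (cpos c + -1 - 1 - Z.of_nat j) with (cpos c - 1 - Z.of_nat (S j)) by lia.
        rewrite H2. reflexivity.
    + intros v Hv. unfold S'. repeat rewrite upd_neq by lia. reflexivity.
  - eexists. split; [|split].
    + apply X_Block. econstructor; [exact HA|]. econstructor; [|constructor].
      eapply chain_ok; eauto. all: try (unfold S'; look).
      unfold action. rewrite Hd. apply X_Block. cbn [app mv].
      stepa. stepa. stepa. stepa. apply XS_Nil.
    + rewrite HR1. rewrite mod_lin, div_lin by lia.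
      exists (Z.of_nat B * Lz + Z.of_nat a'), (Rz / Z.of_nat B).
      fold B. cbn [cstate].
      split; [look|]. split; [look|]. split; [look|]. split; [nia|]. split; [lia|].
      split; [|split; [lia| repeat apply Decl_upd; auto]].
      intro j. cbn [ctape cpos]. split.
      * destruct (Hrep (S j)) as [H1 _].
        destruct (Z.eqb_spec (cpos c + 1 + Z.of_nat j) (cpos c)); [lia|].
        replace (cpos c + 1 + Z.of_nat j) with (cpos c + Z.of_nat (S j)) by lia.
        rewrite H1. reflexivity.
      * destruct j as [|j].
        -- rewrite digit_0 by lia. rewrite Nat2Z.id.
           destruct (Z.eqb_spec (cpos c + 1 - 1 - Z.of_nat 0) (cpos c)); [reflexivity|lia].
        -- rewrite digit_S by lia. destruct (Hrep j) as [_ H2].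
           destruct (Z.eqb_spec (cpos c + 1 - 1 - Z.of_nat (S j)) (cpos c)); [lia|].
           replace (cpos c + 1 - 1 - Z.of_nat (S j)) with (cpos c - 1 - Z.of_nat j) by lia.
           rewrite H2. reflexivity.
    + intros v Hv. unfold S'. repeat rewrite upd_neq by lia. reflexivity.
  - eexists. split; [|split].
    + apply X_Block. econstructor; [exact HA|]. econstructor; [|constructor].
      eapply chain_ok; eauto. all: try (unfold S'; look).
      unfold action. rewrite Hd. apply X_Block. cbn [app mv].
      stepa. stepa. apply XS_Nil.
    + rewrite HR1.
      exists Lz, (Z.of_nat B * (Rz / Z.of_nat B) + Z.of_nat a').
      fold B. cbn [cstate].
      split; [look|]. split; [look|]. split; [look|]. split; [nia|]. split; [nia|].
      split; [|split; [lia| repeat apply Decl_upd; auto]].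
      intro j. cbn [ctape cpos]. split.
      * destruct j as [|j].
        -- rewrite digit_0 by lia. rewrite Nat2Z.id.
           destruct (Z.eqb_spec (cpos c + 0 + Z.of_nat 0) (cpos c)); [reflexivity|lia].
        -- rewrite digit_S by lia. destruct (Hrep (S j)) as [H1 _].
           destruct (Z.eqb_spec (cpos c + 0 + Z.of_nat (S j)) (cpos c)); [lia|].
           replace (cpos c + 0 + Z.of_nat (S j)) with (cpos c + Z.of_nat (S j)) by lia.
           rewrite H1. reflexivity.
      * destruct (Hrep j) as [_ H2].
        destruct (Z.eqb_spec (cpos c + 0 - 1 - Z.of_nat j) (cpos c)); [lia|].
        replace (cpos c + 0 - 1 - Z.of_nat j) with (cpos c - 1 - Z.of_nat j) by lia.
        rewrite H2. reflexivity.
    + intros v Hv. unfold S'. repeat rewrite upd_neq by lia. reflexivity.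
Qed.

Fixpoint Rep (n : nat) (body : stmt) : stmt :=
  match n with O => body | S n' => SFor (20 + n')%nat (EVar vY) (Rep n' body) end.

Lemma zsize_nonneg y : 0 <= zsize y.
Proof. unfold zsize. apply Z.log2_up_nonneg. Qed.

Lemma Rep_ok (I : nat -> store -> Prop) body y :
  (forall N St, I N St -> St vY = Some (VInt y)) ->
  (forall N St w v, (20 <= w)%nat -> I N St -> I N (upd St w v)) ->
  (forall N St, I N St -> exists S1, exec St body S1 /\ I (N+1)%nat S1) ->
  forall n N St, I N St -> exists S1, exec St (Rep n body) S1 /\ I (N + Z.to_nat (zsize y) ^ n)%nat S1.
Proof.
  intros HY Hw Hb n. induction n as [|n IH]; intros N St HI.
  - simpl. rewrite Nat.add_1_r. destruct (Hb N St HI) as [S1 [? ?]]. exists S1. rewrite Nat.add_1_r in *. auto.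
  - cbn [Rep].
    destruct (exec_for St (20 + n)%nat (EVar vY) (Rep n body) y
      (fun j S' => I (N + Z.to_nat j * Z.to_nat (zsize y) ^ n)%nat S')) as [S1 [H1 H2]].
    + apply ev_var. eauto.
    + simpl. rewrite Nat.add_0_r. auto.
    + intros j S' Hj HP. destruct (IH (N + Z.to_nat j * Z.to_nat (zsize y) ^ n)%nat (upd S' (20 + n)%nat (VInt j))) as [S2 [H3 H4]].
      apply Hw; [lia|exact HP].
      exists S2. split; auto. replace (Z.to_nat (j+1)) with (S (Z.to_nat j)) by lia.
      cbn [Nat.mul]. replace (N + (Z.to_nat (zsize y) ^ n + Z.to_nat j * Z.to_nat (zsize y) ^ n))%nat
        with (N + Z.to_nat j * Z.to_nat (zsize y) ^ n + Z.to_nat (zsize y) ^ n)%nat by lia. exact H4.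
    + exists S1. split; auto.
Qed.

Lemma iter_fix M c n : step M c = None -> Nat.iter n (nextc M) c = c.
Proof. intros H. induction n; simpl; auto. rewrite IHn. unfold nextc. rewrite H. auto. Qed.

Lemma run_iter M n c : run M n c = Nat.iter n (nextc M) c.
Proof. revert c. induction n; intros c; simpl; auto.
  rewrite <- Nat.iter_swap.
  destruct (step M c) as [c'|] eqn:E.
  - rewrite IHn. replace (nextc M c) with c' by (unfold nextc; rewrite E; reflexivity). reflexivity.
  - replace (nextc M c) with c by (unfold nextc; rewrite E; reflexivity). rewrite iter_fix; auto. Qed.

Lemma iter_ge M c t N : (t <= N)%nat -> step M (run M t c) = None ->
  Nat.iter N (nextc M) c = run M t c.
Proof. intros Ht Hs. rewrite run_iter in *. replace N with ((N - t) + t)%nat by lia.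
  rewrite Nat.iter_add. apply iter_fix. auto. Qed.

Fixpoint go' (p : positive) (acc : list nat) : list nat :=
  match p with
  | xH => 2%nat :: acc
  | xO p' => go' p' (1%nat :: acc)
  | xI p' => go' p' (2%nat :: acc)
  end.
Lemma bits_go p : bits_pos p = go' p [].
Proof. reflexivity. Qed.
Lemma go_app p acc : go' p acc = go' p [] ++ acc.
Proof. revert acc. induction p; intros acc; simpl; auto.
  - rewrite IHp, (IHp [2%nat]), <- app_assoc. reflexivity.
  - rewrite IHp, (IHp [1%nat]), <- app_assoc. reflexivity. Qed.
Lemma bits_xO p : bits_pos (xO p) = bits_pos p ++ [1%nat].
Proof. rewrite !bits_go. simpl. apply go_app. Qed.
Lemma bits_xI p : bits_pos (xI p) = bits_pos p ++ [2%nat].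
Proof. rewrite !bits_go. simpl. apply go_app. Qed.

Lemma zsize_pos p : zsize (Zpos p) = Z.succ (Z.log2 (Zpos p)).
Proof. unfold zsize. simpl Z.abs. rewrite Z.log2_up_eqn by lia. f_equal. f_equal. lia. Qed.
Lemma zsize_xO p : zsize (Zpos (xO p)) = zsize (Zpos p) + 1.
Proof. rewrite !zsize_pos. rewrite Pos2Z.inj_xO. rewrite Z.log2_double by lia. lia. Qed.
Lemma zsize_xI p : zsize (Zpos (xI p)) = zsize (Zpos p) + 1.
Proof. rewrite !zsize_pos. rewrite Pos2Z.inj_xI. rewrite Z.log2_succ_double by lia. lia. Qed.
Lemma zsize_1 : zsize 1 = 1.
Proof. reflexivity. Qed.

Section Enc.
Variable B : nat.
Hypothesis HB : (5 <= B)%nat.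
Variable cc : nat.

Definition num (l : list nat) : Z := fold_right (fun s acc => Z.of_nat s + Z.of_nat B * acc) 0 l.

Definition EI (l : list nat) (St : store) :=
  St vR = Some (VInt (num l)) /\ St vP = Some (VInt (2 ^ Z.of_nat (cc + length l))) /\ Decl St.

Definition PUSH (s : nat) : stmt :=
  SBlock [SAssign vR (eadd (mulc (EVar vR) B) (ENum s)); SAssign vP (eadd (EVar vP) (EVar vP))].

Definition EBODY : stmt :=
  SBlock [SAssign vD (emod (EVar vT) (ENum 2)); SAssign vT (ediv (EVar vT) (ENum 2));
          SAssign vR (eadd (mulc (EVar vR) B) (eadd (EVar vD) (ENum 1)));
          SAssign vP (eadd (EVar vP) (EVar vP))].

Definition ENC (x : var) : list stmt :=
  [SAssign vY (EVar x); SAssign vT (EVar x);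
   SIf (elt (EVar x) (ENum 0)) (SAssign vT (esub (ENum 0) (EVar x))) (SBlock []);
   SFor 20%nat (EVar vY) EBODY;
   SIf (eeq (EVar x) (ENum 0)) (PUSH 1) (SBlock []);
   SIf (elt (EVar x) (ENum 0)) (PUSH 3) (SBlock [])].

Definition frame (St St' : store) := forall w, (21 <= w)%nat -> St' w = St w.

Lemma pow_succ_add n : 2 ^ Z.of_nat (S n) = 2 ^ Z.of_nat n + 2 ^ Z.of_nat n.
Proof. rewrite Nat2Z.inj_succ, Z.pow_succ_r by lia. lia. Qed.

Lemma push_ok s l St : EI l St -> exists St', exec St (PUSH s) St' /\ EI (s :: l) St' /\ frame St St'.
Proof. intros (HR & HP & HD). eexists. split; [|split].
  - apply X_Block. stepa. stepa. apply XS_Nil.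
  - split; [|split]; [lk|lk|repeat apply Decl_upd; auto].
    + simpl. do 2 f_equal. lia.
    + do 2 f_equal. simpl length. rewrite Nat.add_succ_r, pow_succ_add. reflexivity.
  - intros w Hw. repeat rewrite upd_neq by lia. reflexivity.
Qed.

Lemma EI_upd l St w v : w <> vR -> w <> vP -> EI l St -> EI l (upd St w v).
Proof. intros Hw Hw' (HR & HP & HD). split; [|split]; [lk; auto|lk; auto|apply Decl_upd; auto]. Qed.

Lemma frame_trans S1 S2 S3 : frame S1 S2 -> frame S2 S3 -> frame S1 S3.
Proof. unfold frame. intros H1 H2 w Hw. rewrite H2, H1; auto. Qed.
Lemma frame_upd St w v : (w < 21)%nat -> frame St (upd St w v).
Proof. intros H x Hx. apply upd_neq. lia. Qed.
Lemma frame_refl St : frame St St.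
Proof. intros x _; auto. Qed.

Lemma body_ok t l St : St vT = Some (VInt t) -> 0 <= t -> EI l St ->
  exists St', exec St EBODY St' /\ St' vT = Some (VInt (t / 2)) /\
    EI ((Z.to_nat (t mod 2) + 1)%nat :: l) St' /\ frame St St'.
Proof. intros HT Ht (HR & HP & HD).
  pose proof (Z.mod_pos_bound t 2 ltac:(lia)).
  pose proof (Z.div_pos t 2 ltac:(lia) ltac:(lia)).
  eexists. split; [|split; [|split; [split; [|split]|]]].
  - apply X_Block. stepa. stepa. stepa. stepa. apply XS_Nil.
  - lk. reflexivity.
  - lk. simpl. do 2 f_equal. lia.
  - lk. do 2 f_equal. simpl length. rewrite Nat.add_succ_r, pow_succ_add. reflexivity.
  - repeat apply Decl_upd; auto.
  - intros w Hw. repeat rewrite upd_neq by lia. reflexivity.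
Qed.

Lemma bits_loop p : forall j i St l, i - j = zsize (Zpos p) -> 0 <= j -> St vT = Some (VInt (Zpos p)) -> EI l St ->
  exists St', exec_loop 20%nat EBODY j i St St' /\ EI (bits_pos p ++ l) St' /\ frame St St'.
Proof.
  induction p as [p IH|p IH|]; intros j i St l Hij Hj HT HEI.
  - destruct (body_ok (Zpos (xI p)) l (upd St 20%nat (VInt j))) as (S1 & H1 & H2 & H3 & H4).
    + lk. auto.
    + lia.
    + apply EI_upd; [lia|lia|auto].
    + rewrite Pos2Z.inj_xI in H2, H3. rewrite mod_lin, div_lin in * by lia.
      destruct (IH (j+1) i S1 (2%nat :: l)) as (S2 & H5 & H6 & H7); auto.
      * rewrite zsize_xI in Hij. lia.
      * lia.
      * exists S2. split; [|split].
        -- econstructor; eauto. rewrite zsize_xI in Hij. pose proof (zsize_nonneg (Zpos p)). lia.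
        -- rewrite bits_xI, <- app_assoc. exact H6.
        -- eapply frame_trans; [|eapply frame_trans; [exact H4|exact H7]]. apply frame_upd; lia.
  - destruct (body_ok (Zpos (xO p)) l (upd St 20%nat (VInt j))) as (S1 & H1 & H2 & H3 & H4).
    + lk. auto.
    + lia.
    + apply EI_upd; [lia|lia|auto].
    + rewrite Pos2Z.inj_xO in H2, H3. replace (2 * Z.pos p) with (2 * Z.pos p + 0) in H2, H3 by lia.
      rewrite mod_lin, div_lin in * by lia.
      destruct (IH (j+1) i S1 (1%nat :: l)) as (S2 & H5 & H6 & H7); auto.
      * rewrite zsize_xO in Hij. lia.
      * lia.
      * exists S2. split; [|split].
        -- econstructor; eauto. rewrite zsize_xO in Hij. pose proof (zsize_nonneg (Zpos p)). lia.
        -- rewrite bits_xO, <- app_assoc. exact H6.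
        -- eapply frame_trans; [|eapply frame_trans; [exact H4|exact H7]]. apply frame_upd; lia.
  - destruct (body_ok 1 l (upd St 20%nat (VInt j))) as (S1 & H1 & H2 & H3 & H4).
    + lk. auto.
    + lia.
    + apply EI_upd; [lia|lia|auto].
    + exists S1. split; [|split].
      * econstructor; eauto. rewrite zsize_1 in Hij. lia. constructor. rewrite zsize_1 in Hij. lia.
      * exact H3.
      * eapply frame_trans; [|exact H4]. apply frame_upd; lia.
Qed.

Lemma skip_ok St : exec St (SBlock []) St.
Proof. constructor. constructor. Qed.

Lemma enc_ok x v l St : (21 <= x)%nat -> St x = Some (VInt v) -> EI l St ->
  exists St', exec_seq St (ENC x) St' /\ EI (enc_Z v ++ l) St' /\ frame St St'.
Proof.
  intros Hx Hv HEI. pose proof HEI as (HR & HP & HD).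
  set (S1 := upd (upd St vY (VInt v)) vT (VInt v)).
  assert (HS1 : exec_seq St [SAssign vY (EVar x); SAssign vT (EVar x)] S1).
  { unfold S1. stepa. stepa. apply XS_Nil. }
  assert (HE1 : EI l S1) by (unfold S1; apply EI_upd; [lia|lia|]; apply EI_upd; [lia|lia|auto]).
  assert (HF1 : frame St S1) by (unfold S1; eapply frame_trans; apply frame_upd; lia).
  assert (Hx1 : S1 x = Some (VInt v)) by (unfold S1; lk; auto).
  destruct v as [|p|p].
  - destruct (push_ok 1 l S1 HE1) as (S2 & H1 & H2 & H3).
    exists S2. split; [|split].
    + change (ENC x) with ([SAssign vY (EVar x); SAssign vT (EVar x)] ++
        [SIf (elt (EVar x) (ENum 0)) (SAssign vT (esub (ENum 0) (EVar x))) (SBlock []);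
         SFor 20%nat (EVar vY) EBODY;
         SIf (eeq (EVar x) (ENum 0)) (PUSH 1) (SBlock []);
         SIf (elt (EVar x) (ENum 0)) (PUSH 3) (SBlock [])]).
      eapply exseq_app; [exact HS1|].
      econstructor. { apply X_IfF; [|apply skip_ok]. eapply ev_ltb; [apply ev_var; exact Hx1 | constructor | reflexivity]. }
      econstructor. { eapply for_exec; [unfold S1; lk; reflexivity|]. constructor. cbv; congruence. }
      econstructor. { apply X_IfT; [|exact H1]. eapply ev_eqb; [apply ev_var; exact Hx1 | constructor | reflexivity]. }
      econstructor. { apply X_IfF; [|apply skip_ok]. eapply ev_ltb; [apply ev_var; rewrite H3 by lia; eauto|constructor|reflexivity]. }
      constructor.
    + exact H2.
    + eapply frame_trans; eauto.
  - destruct (bits_loop p 0 (zsize (Zpos p)) S1 l) as (S2 & H1 & H2 & H3);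
      try lia; try (unfold S1; lk; reflexivity); auto.
    exists S2. split; [|split].
    + change (ENC x) with ([SAssign vY (EVar x); SAssign vT (EVar x)] ++
        [SIf (elt (EVar x) (ENum 0)) (SAssign vT (esub (ENum 0) (EVar x))) (SBlock []);
         SFor 20%nat (EVar vY) EBODY;
         SIf (eeq (EVar x) (ENum 0)) (PUSH 1) (SBlock []);
         SIf (elt (EVar x) (ENum 0)) (PUSH 3) (SBlock [])]).
      eapply exseq_app; [exact HS1|].
      econstructor. { apply X_IfF; [|apply skip_ok]. eapply ev_ltb; [apply ev_var; exact Hx1 | constructor | reflexivity]. }
      econstructor. { eapply for_exec; [unfold S1; lk; reflexivity|exact H1]. }
      econstructor. { apply X_IfF; [|apply skip_ok]. eapply ev_eqb; [apply ev_var; rewrite H3 by lia; eauto|constructor|reflexivity]. }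
      econstructor. { apply X_IfF; [|apply skip_ok]. eapply ev_ltb; [apply ev_var; rewrite H3 by lia; eauto|constructor|reflexivity]. }
      constructor.
    + exact H2.
    + eapply frame_trans; eauto.
  - set (S1' := upd S1 vT (VInt (Zpos p))).
    assert (HE1' : EI l S1') by (unfold S1'; apply EI_upd; [lia|lia|auto]).
    destruct (bits_loop p 0 (zsize (Zpos p)) S1' l) as (S2 & H1 & H2 & H3);
      try lia; try (unfold S1'; lk; reflexivity); auto.
    { destruct (push_ok 3 (bits_pos p ++ l) S2 H2) as (S3 & H4 & H5 & H6).
      exists S3. split; [|split].
      * change (ENC x) with ([SAssign vY (EVar x); SAssign vT (EVar x)] ++
          [SIf (elt (EVar x) (ENum 0)) (SAssign vT (esub (ENum 0) (EVar x))) (SBlock []);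
           SFor 20%nat (EVar vY) EBODY;
           SIf (eeq (EVar x) (ENum 0)) (PUSH 1) (SBlock []);
           SIf (elt (EVar x) (ENum 0)) (PUSH 3) (SBlock [])]).
        eapply exseq_app; [exact HS1|].
        econstructor. { apply X_IfT. eapply ev_ltb; [apply ev_var; exact Hx1 | constructor | reflexivity].
                        unfold S1'. apply exec_assign. apply decl_some; [apply HE1|lia].
                        eapply ev_sub; [constructor|apply ev_var; eauto|reflexivity]. }
        econstructor. { eapply for_exec; [unfold S1', S1; lk; reflexivity|exact H1]. }
        econstructor. { apply X_IfF; [|apply skip_ok]. eapply ev_eqb; [apply ev_var; rewrite H3 by lia; unfold S1'; lk; eauto|constructor|reflexivity]. }
        econstructor. { apply X_IfT; [|exact H4]. eapply ev_ltb; [apply ev_var; rewrite H3 by lia; unfold S1'; lk; eauto|constructor|reflexivity]. }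
        constructor.
      * exact H5.
      * eapply frame_trans; [exact HF1|]. apply (frame_trans _ S1'); [unfold S1'; apply frame_upd; lia|]. eapply frame_trans; [exact H3|exact H6]. }
Qed.

End Enc.

Fixpoint encs (B : nat) (xs : list var) : list stmt :=
  match xs with
  | [] => []
  | [x] => ENC B x
  | x :: xs' => encs B xs' ++ (PUSH B 4 :: ENC B x)
  end.

Lemma Forall2_frame (xs : list var) (vs : list Z) St St' :
  Forall2 (fun x v => (21 <= x)%nat /\ St x = Some (VInt v)) xs vs -> frame St St' ->
  Forall2 (fun x v => (21 <= x)%nat /\ St' x = Some (VInt v)) xs vs.
Proof. intros H Hf. induction H; constructor; auto. destruct H; split; auto. rewrite Hf; auto. Qed.

Lemma encs_ok B (HB : (5 <= B)%nat) cc xs vs : forall St l,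
  Forall2 (fun x v => (21 <= x)%nat /\ St x = Some (VInt v)) xs vs -> EI B cc l St ->
  exists St', exec_seq St (encs B xs) St' /\ EI B cc (enc_input vs ++ l) St' /\ frame St St'.
Proof.
  revert vs. induction xs as [|x xs IH]; intros vs St l H HEI; inversion H; subst.
  - exists St. split; [constructor|]. split; auto. apply frame_refl.
  - match goal with Hh : _ /\ St x = _ |- _ => destruct Hh as [Hx Hv] end. destruct xs as [|x' xs'].
    + inversion H4; subst. simpl. apply enc_ok; auto.
    + destruct l' as [|v' vs']; [inversion H4|].
      destruct (IH (v' :: vs') St l H4 HEI) as (S1 & H1 & H2 & H3).
      destruct (push_ok B HB cc 4 _ S1 H2) as (S2 & H44 & H6 & H7).
      assert (Hv2 : S2 x = Some (VInt y)) by (rewrite H7, H3; auto).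
      destruct (enc_ok B HB cc x y _ S2 Hx Hv2 H6) as (S3 & H8 & H9 & H10).
      exists S3. split; [|split].
      * change (encs B (x :: x' :: xs')) with (encs B (x' :: xs') ++ (PUSH B 4 :: ENC B x)).
        eapply exseq_app; [exact H1|]. econstructor; [exact H44|exact H8].
      * change (enc_input (y :: v' :: vs')) with (enc_Z y ++ 4%nat :: enc_input (v' :: vs')).
        rewrite <- app_assoc. exact H9.
      * eapply frame_trans; [exact H3|]. eapply frame_trans; [exact H7|exact H10].
Qed.

Definition dstep (st : Z * bool) (d : nat) : Z * bool :=
  if Nat.eqb d 3 then (fst st, true) else (fst st + fst st + Z.of_nat d - 1, snd st).
Definition dec (l : list nat) := fold_left dstep l (0, false).
Definition decres (st : Z * bool) := if snd st then - fst st else fst st.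

Lemma dec_bits p n : fold_left dstep (bits_pos p) (0, n) = (Zpos p, n).
Proof. induction p.
  - rewrite bits_xI, fold_left_app, IHp. cbn [fold_left]. unfold dstep. cbn [Nat.eqb fst snd].
    rewrite Pos2Z.inj_xI. f_equal. lia.
  - rewrite bits_xO, fold_left_app, IHp. cbn [fold_left]. unfold dstep. cbn [Nat.eqb fst snd].
    rewrite Pos2Z.inj_xO. f_equal. lia.
  - reflexivity. Qed.

Lemma dec_enc z : decres (dec (enc_Z z)) = z.
Proof. destruct z; unfold dec, decres; simpl enc_Z.
  - reflexivity.
  - rewrite dec_bits. reflexivity.
  - cbn [fold_left]. replace (dstep (0, false) 3%nat) with (0, true) by reflexivity. rewrite dec_bits. reflexivity.
Qed.

Lemma go_in p acc d : In d (go' p acc) -> d = 1%nat \/ d = 2%nat \/ In d acc.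
Proof. revert acc. induction p; intros acc H; simpl in H.
  - destruct (IHp _ H) as [?|[?|[?|?]]]; auto.
  - destruct (IHp _ H) as [?|[?|[?|?]]]; auto.
  - destruct H; auto. Qed.

Lemma enc_Z_sym z d : In d (enc_Z z) -> (1 <= d <= 3)%nat.
Proof. destruct z; simpl; intros H.
  - destruct H as [<-|[]]; lia.
  - rewrite bits_go in H. destruct (go_in _ _ _ H) as [?|[?|[]]]; lia.
  - destruct H as [<-|H]; [lia|]. rewrite bits_go in H. destruct (go_in _ _ _ H) as [?|[?|[]]]; lia.
Qed.

Lemma enc_input_sym vs d : In d (enc_input vs) -> (1 <= d <= 4)%nat.
Proof. induction vs as [|v vs IH]; simpl; [tauto|].
  destruct vs as [|v' vs'].
  - intros H. apply enc_Z_sym in H. lia.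
  - intros H. apply in_app_or in H. destruct H as [H|[<-|H]].
    + apply enc_Z_sym in H; lia.
    + lia.
    + apply IH; auto. Qed.

Lemma firstn_snoc {A} (l : list A) n d : (n < length l)%nat -> firstn (S n) l = firstn n l ++ [nth n l d].
Proof. revert n. induction l; intros n H; simpl in *; [lia|].
  destruct n; simpl; auto. rewrite IHl by lia. reflexivity. Qed.

Definition divn (B R : Z) (n : nat) := Nat.iter n (fun x => x / B) R.
Lemma digit_divn B R j : digit B R j = digit B (divn B R j) 0.
Proof. revert R. induction j; intros R; auto. change (digit B R (S j)) with (digit B (R/B) j). rewrite IHj.
  unfold divn. rewrite Nat.iter_succ_r. reflexivity. Qed.
Lemma divn_S B R j : divn B R (S j) = divn B R j / B.
Proof. unfold divn. rewrite Nat.iter_succ. reflexivity. Qed.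
Lemma divn_nonneg B R j : 0 < B -> 0 <= R -> 0 <= divn B R j.
Proof. intros. unfold divn. induction j; simpl; auto. apply Z.div_pos; lia. Qed.

Lemma digit_ge B R j : 1 < B -> 0 <= R -> digit B R j <> 0%nat -> B ^ Z.of_nat j <= R.
Proof. revert R. induction j; intros R HB HR H; simpl in H.
  - simpl. destruct (Z.eq_dec R 0); [subst; simpl in H; lia|lia].
  - pose proof (IHj (R / B) HB (Z.div_pos R B ltac:(lia) ltac:(lia)) H).
    rewrite Nat2Z.inj_succ, Z.pow_succ_r by lia.
    pose proof (Z.mul_div_le R B ltac:(lia)). nia. Qed.

Lemma dec_snoc l d : dec (l ++ [d]) = dstep (dec l) d.
Proof. unfold dec. rewrite fold_left_app. reflexivity. Qed.
Lemma dstep_ne3 st d : d <> 3%nat -> dstep st d = (fst st + fst st + Z.of_nat d - 1, snd st).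
Proof. intros. unfold dstep. rewrite (proj2 (Nat.eqb_neq _ _) H). reflexivity. Qed.

Section Dec.
Variable B : nat.
Hypothesis HB : (5 <= B)%nat.

Definition DECBODY : stmt :=
  SIf (eeq (EVar vDN) (ENum 0))
    (SBlock [SAssign vD (emod (EVar vR) (ENum B)); SAssign vR (ediv (EVar vR) (ENum B));
             SIf (eeq (EVar vD) (ENum 0)) (SAssign vDN (ENum 1))
               (SIf (eeq (EVar vD) (ENum 3)) (SAssign vNG (ENum 1))
                  (SAssign vV (esub (eadd (eadd (EVar vV) (EVar vV)) (EVar vD)) (ENum 1))))])
    (SBlock []).

Variable e : list nat.
Variable R0 : Z.
Let len := length e.

Definition DInv (n : nat) (St : store) :=
  St vDN = Some (VInt (if (n <=? len)%nat then 0 else 1)) /\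
  St vV = Some (VInt (fst (dec (firstn n e)))) /\
  St vNG = Some (VInt (if snd (dec (firstn n e)) then 1 else 0)) /\
  ((n <= len)%nat -> St vR = Some (VInt (divn (Z.of_nat B) R0 n))) /\ Decl St.

Hypothesis HR0 : 0 <= R0.
Hypothesis Hdig : forall j, (j < len)%nat -> digit (Z.of_nat B) R0 j = nth j e 0%nat.
Hypothesis Hend : digit (Z.of_nat B) R0 len = 0%nat.
Hypothesis Hsym : forall d, In d e -> (1 <= d <= 3)%nat.

Lemma DInv_upd n St w v : (12 <= w)%nat -> DInv n St -> DInv n (upd St w v).
Proof. intros Hw (H1 & H2 & H3 & H4 & H5). repeat split; try (lk; auto).
  intros. lk. auto. apply Decl_upd; auto. Qed.

Lemma dec_body n St : DInv n St -> exists St', exec St DECBODY St' /\ DInv (S n) St'.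
Proof.
  intros (HDN & HV & HNG & HR & HD).
  assert (HBz : 5 <= Z.of_nat B) by lia.
  destruct (Nat.lt_total n len) as [Hlt|[Heq|Hgt]].
  - assert (Hn : (n <=? len)%nat = true) by (apply Nat.leb_le; lia). rewrite Hn in HDN.
    specialize (HR ltac:(lia)).
    assert (Hdv : 0 <= (divn (Z.of_nat B) R0 n)) by (apply divn_nonneg; lia).
    assert (Hd : (divn (Z.of_nat B) R0 n) mod Z.of_nat B = Z.of_nat (nth n e 0%nat)).
    { rewrite <- Hdig by lia. rewrite digit_divn. simpl.
      rewrite Z2Nat.id; auto. apply Z.mod_pos_bound. lia. }
    assert (Hin : In (nth n e 0%nat) e) by (apply nth_In; lia).
    pose proof (Hsym _ Hin) as Hs.
    assert (Hfs : firstn (S n) e = firstn n e ++ [nth n e 0%nat]) by (apply firstn_snoc; lia).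
    destruct (Nat.eq_dec (nth n e 0%nat) 3) as [H3|H3].
    + eexists. split.
      * apply X_IfT. eapply ev_eqb; [apply ev_var; eauto|constructor|reflexivity].
        apply X_Block. stepa. stepa. eapply XS_Cons; [|apply XS_Nil].
        apply X_IfF. eapply ev_eqb; [apply ev_var; look|constructor|]. rewrite Hd, H3. reflexivity.
        apply X_IfT. eapply ev_eqb; [apply ev_var; look|constructor|]. rewrite Hd, H3. reflexivity.
        apply exec_assign; [apply decl_some; [repeat apply Decl_upd; auto|lia]|constructor].
      * split; [|split; [|split; [|split]]].
        -- lk. rewrite (proj2 (Nat.leb_le _ _)) by lia. first [reflexivity | exact HDN].
        -- lk. rewrite Hfs, dec_snoc, H3. exact HV.
        -- lk. rewrite Hfs, dec_snoc, H3. reflexivity.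
        -- intros _. lk. rewrite divn_S. reflexivity.
        -- repeat apply Decl_upd; auto.
    + eexists. split.
      * apply X_IfT. eapply ev_eqb; [apply ev_var; eauto|constructor|reflexivity].
        apply X_Block. stepa. stepa. eapply XS_Cons; [|apply XS_Nil].
        apply X_IfF. eapply ev_eqb; [apply ev_var; look|constructor|]. rewrite Hd. symmetry. apply Z.eqb_neq. lia.
        apply X_IfF. eapply ev_eqb; [apply ev_var; look|constructor|]. rewrite Hd. symmetry. apply Z.eqb_neq. lia.
        apply exec_assign; [apply decl_some; [repeat apply Decl_upd; auto|lia]|].
        evl3.
      * split; [|split; [|split; [|split]]].
        -- lk. rewrite (proj2 (Nat.leb_le _ _)) by lia. first [reflexivity | exact HDN].
        -- lk. rewrite Hfs, dec_snoc, dstep_ne3 by auto. cbn [fst snd]. rewrite Hd. reflexivity.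
        -- lk. rewrite Hfs, dec_snoc, dstep_ne3 by auto. cbn [fst snd]. exact HNG.
        -- intros _. lk. rewrite divn_S. reflexivity.
        -- repeat apply Decl_upd; auto.
  - subst n. assert (Hn : (len <=? len)%nat = true) by (apply Nat.leb_le; lia). rewrite Hn in HDN.
    specialize (HR ltac:(lia)).
    assert (Hdv : 0 <= (divn (Z.of_nat B) R0 len)) by (apply divn_nonneg; lia).
    assert (Hd : (divn (Z.of_nat B) R0 len) mod Z.of_nat B = 0).
    { pose proof Hend as He. rewrite digit_divn in He. simpl in He.
      pose proof (Z.mod_pos_bound (divn (Z.of_nat B) R0 len) (Z.of_nat B) ltac:(lia)). lia. }
    assert (Hfs : firstn (S len) e = firstn len e) by (rewrite !firstn_all2 by (unfold len in *; lia); reflexivity).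
    eexists. split.
    * apply X_IfT. eapply ev_eqb; [apply ev_var; eauto|constructor|reflexivity].
      apply X_Block. stepa. stepa. eapply XS_Cons; [|apply XS_Nil].
      apply X_IfT. eapply ev_eqb; [apply ev_var; look|constructor|]. rewrite Hd. reflexivity.
      apply exec_assign; [apply decl_some; [repeat apply Decl_upd; auto|lia]|constructor].
    * split; [|split; [|split; [|split]]].
      -- lk. rewrite (proj2 (Nat.leb_gt _ _)) by lia. reflexivity.
      -- lk. rewrite Hfs. exact HV.
      -- lk. rewrite Hfs. exact HNG.
      -- intros; lia.
      -- repeat apply Decl_upd; auto.
  - assert (Hn : (n <=? len)%nat = false) by (apply Nat.leb_gt; lia). rewrite Hn in HDN.
    assert (Hfs : firstn (S n) e = firstn n e) by (rewrite !firstn_all2 by (unfold len in *; lia); reflexivity).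
    exists St. split.
    * apply X_IfF. eapply ev_eqb; [apply ev_var; eauto|constructor|reflexivity]. apply skip_ok.
    * split; [|split; [|split; [|split]]].
      -- rewrite (proj2 (Nat.leb_gt _ _)) by lia. auto.
      -- rewrite Hfs. exact HV.
      -- rewrite Hfs. exact HNG.
      -- intros; lia.
      -- auto.
Qed.

Lemma dec_loop St0 : DInv 0 St0 -> St0 vY = Some (VInt R0) ->
  exists St', exec St0 (SFor 20%nat (EVar vY) DECBODY) St' /\ DInv (Z.to_nat (zsize R0)) St'.
Proof. intros H0 HY.
  destruct (exec_for St0 20%nat (EVar vY) DECBODY R0 (fun j St => DInv (Z.to_nat j) St)) as [St' [H1 H2]].
  - apply ev_var; auto.
  - exact H0.
  - intros j St Hj HI. destruct (dec_body (Z.to_nat j) (upd St 20%nat (VInt j))) as [S1 [H3 H4]].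
    + apply DInv_upd; [lia|auto].
    + exists S1. split; auto. replace (Z.to_nat (j+1)) with (S (Z.to_nat j)) by lia. auto.
  - exists St'; auto.
Qed.

Lemma len_le_size : (len <= Z.to_nat (zsize R0))%nat.
Proof. destruct len as [|l] eqn:El; [lia|].
  assert (Hnz : digit (Z.of_nat B) R0 l <> 0%nat).
  { rewrite Hdig by lia. assert (In (nth l e 0%nat) e) by (apply nth_In; unfold len in El; lia).
    specialize (Hsym _ H). lia. }
  pose proof (digit_ge (Z.of_nat B) R0 l ltac:(lia) HR0 Hnz) as Hge.
  assert (2 ^ Z.of_nat l <= Z.of_nat B ^ Z.of_nat l) by (apply Z.pow_le_mono_l; lia).
  unfold zsize. rewrite Z.abs_eq by lia.
  destruct (Z.le_gt_cases (Z.log2_up (R0 + 1)) (Z.of_nat l)) as [Hle|Hgt].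
  - apply Z.log2_up_le_pow2 in Hle; lia.
  - lia.
Qed.

End Dec.

Definition decls : list stmt := map (fun v => SDecl TInt v) (seq 0 11) ++ [SDecl TIint vY].

Definition PB (k : nat) : nat := (22 + k)%nat.

Definition pbody (M : TM) (cc k m : nat) : list stmt :=
  decls ++ [SAssign vP (ENum (2 ^ cc))] ++ encs (nsymbols M) (seq (PB k) m) ++
  [SAssign vQ (ENum (start M)); SAssign vL (ENum 0);
   SAssign vY (EVar vP); Rep (S k) (STEP M);
   SAssign vY (EVar vR); SAssign vV (ENum 0); SAssign vNG (ENum 0); SAssign vDN (ENum 0);
   SFor 20%nat (EVar vY) (DECBODY (nsymbols M));
   SAssign vOUT (EVar vV);
   SIf (eeq (EVar vNG) (ENum 1)) (SAssign vOUT (esub (ENum 0) (EVar vV))) (SBlock [])].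

Definition prog (M : TM) (cc k m : nat) : program :=
  mkProgram (seq (PB k) m) (pbody M cc k m) (EVar vOUT).

Lemma decls_int l St : exists St', exec_seq St (map (fun v => SDecl TInt v) l) St' /\
  (forall v, In v l -> St' v = Some (VInt 0)) /\ (forall v, ~ In v l -> St' v = St v).
Proof. revert St. induction l as [|a l IH]; intros St; simpl.
  - exists St. split; [constructor|]. split; [tauto|auto].
  - destruct (IH (upd St a (VInt 0))) as (S1 & H1 & H2 & H3).
    exists S1. split; [econstructor; [constructor|exact H1]|split].
    + intros v [<-|Hv]; auto. destruct (in_dec Nat.eq_dec a l); auto. rewrite H3; auto. apply upd_eq.
    + intros v Hv. rewrite H3 by tauto. apply upd_neq. intro; subst; tauto.
Qed.

Lemma decls_ok St : exists St', exec_seq St decls St' /\ (forall v, (v < 12)%nat -> St' v = Some (VInt 0)) /\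
  frame St St'.
Proof. destruct (decls_int (seq 0 11) St) as (S1 & H1 & H2 & H3).
  exists (upd S1 vY (VInt 0)). split; [|split].
  - eapply exseq_app; [exact H1|]. econstructor; [constructor|constructor].
  - intros v Hv. destruct (Nat.eq_dec v vY); [subst; apply upd_eq|]. rewrite upd_neq by lia.
    apply H2. apply in_seq. lia.
  - intros w Hw. rewrite upd_neq by lia. apply H3. rewrite in_seq. lia.
Qed.

Lemma F2_impl {A B} (P Q : A -> B -> Prop) l1 l2 : (forall x y, P x y -> Q x y) -> Forall2 P l1 l2 -> Forall2 Q l1 l2.
Proof. intros H F. induction F; constructor; auto. Qed.

Lemma init_store_seq m : forall a vs, length vs = m ->
  Forall2 (fun x v => (a <= x)%nat /\ init_store (seq a m) vs x = Some (VInt v)) (seq a m) vs.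
Proof. induction m; intros a vs Hl; destruct vs as [|v vs]; simpl in *; try lia; constructor.
  - split; [lia|]. unfold init_store. simpl. apply upd_eq.
  - specialize (IHm (S a) vs ltac:(lia)). unfold init_store in *. simpl.
    eapply F2_impl; [|exact IHm]. intros x y [H1 H2]. split; [lia|]. rewrite upd_neq by lia. auto.
Qed.

Lemma num_nonneg B l : 0 <= num B l.
Proof. induction l; simpl; lia. Qed.

Lemma digit_zero B j : digit B 0 j = 0%nat.
Proof. revert B. induction j; intros B. simpl. destruct B; reflexivity. change (digit B 0 (S j)) with (digit B (0 / B) j). rewrite Zdiv_0_l. auto. Qed.

Lemma digit_num B l j : (0 < B)%nat -> (forall d, In d l -> (d < B)%nat) -> digit (Z.of_nat B) (num B l) j = nth j l 0%nat.
Proof. intros HB. revert j. induction l as [|a l IH]; intros j Hl.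
  - simpl num. rewrite digit_zero. destruct j; reflexivity.
  - simpl num. rewrite Z.add_comm. destruct j.
    + rewrite digit_0 by (try lia; specialize (Hl a (or_introl eq_refl)); lia). simpl. lia.
    + rewrite digit_S by (try lia; specialize (Hl a (or_introl eq_refl)); lia). simpl. apply IH. intros; apply Hl; simpl; auto.
Qed.


Lemma rep_init M w : (5 <= nsymbols M)%nat -> (forall d, In d w -> (1 <= d <= 4)%nat) ->
  rep (Z.of_nat (nsymbols M)) (init_config M w) 0 (num (nsymbols M) w).
Proof. intros HB Hw j. unfold init_config. cbn [ctape cpos]. split.
  - rewrite digit_num; [|lia|intros d Hd; specialize (Hw d Hd); lia].
    destruct (Z.ltb_spec (0 + Z.of_nat j) 0); [lia|]. f_equal. lia.
  - destruct (Z.ltb_spec (0 - 1 - Z.of_nat j) 0); [|lia]. rewrite digit_zero. auto.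
Qed.

Lemma zsize_pow2 n : zsize (2 ^ Z.of_nat n) = Z.of_nat n + 1.
Proof. unfold zsize. rewrite Z.abs_eq by (apply Z.pow_nonneg; lia).
  rewrite !Z.add_1_r. rewrite Z.log2_up_succ_pow2 by lia. lia. Qed.

Lemma time_bound c n k : (c * (n + 1) ^ k <= (c + n + 1) ^ S k)%nat.
Proof. simpl. apply Nat.mul_le_mono; [lia|]. apply Nat.pow_le_mono_l. lia. Qed.

Lemma prog_ok M cc k m f : TM_wf M ->
  (forall vs, length vs = m -> exists t, (t <= cc * (length (enc_input vs) + 1) ^ k)%nat /\
     step M (run M t (init_config M (enc_input vs))) = None /\
     output_is (run M t (init_config M (enc_input vs))) (enc_Z (f vs))) ->
  prog_computes (prog M cc k m) m f.
Proof.
  intros Hwf Hfp. pose proof Hwf as [HB [Hst _]]. split; [simpl; apply length_seq|].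
  intros vs Hl. destruct (Hfp vs Hl) as (t & Ht & Hhalt & Hout).
  set (w := enc_input vs) in *. set (B := nsymbols M) in *. set (c0 := init_config M w) in *.
  cbn [params body prog].
  destruct (decls_ok (init_store (seq (PB k) m) vs)) as (S1 & HS1 & HS1v & HF1).
  assert (HD1 : Decl S1) by (intros v Hv; rewrite HS1v; auto; discriminate).
  set (S2 := upd S1 vP (VInt (Z.of_nat (2 ^ cc)))).
  assert (HE2 : EI B cc [] S2).
  { split; [|split].
    - unfold S2. lk. apply HS1v. lia.
    - unfold S2. lk. rewrite Nat.add_0_r, Nat2Z.inj_pow. reflexivity.
    - intros v Hv. unfold S2. unfold upd. destruct (Nat.eqb v vP); [discriminate|]. rewrite HS1v; auto; discriminate. }
  assert (HF2 : Forall2 (fun x v => (21 <= x)%nat /\ S2 x = Some (VInt v)) (seq (PB k) m) vs).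
  { eapply F2_impl; [|apply (init_store_seq m (PB k) vs Hl)]. intros x v [H1 H2]. unfold PB in H1.
    split; [lia|]. unfold S2. rewrite upd_neq by lia. rewrite HF1 by lia. auto. }
  destruct (encs_ok B HB cc _ _ S2 [] HF2 HE2) as (S3 & HS3 & HE3 & HF3). rewrite app_nil_r in HE3.
  destruct HE3 as (HR3 & HP3 & HD3).
  set (y := 2 ^ Z.of_nat (cc + length w)).
  set (S4 := upd (upd (upd S3 vQ (VInt (Z.of_nat (start M)))) vL (VInt 0)) vY (VInt y)).
  set (I := fun N St => SimRep M (Nat.iter N (nextc M) c0) St /\ St vY = Some (VInt y)).
  assert (HI4 : I 0%nat S4).
  { split; [|unfold S4; lk; reflexivity].
    exists 0, (num B w). split; [unfold S4; lk; reflexivity|].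
    split; [unfold S4; lk; reflexivity|]. split; [unfold S4; lk; auto|].
    split; [lia|]. split; [apply num_nonneg|]. split; [apply rep_init; auto; apply enc_input_sym|].
    split; [simpl; auto|]. unfold S4; repeat apply Decl_upd; auto. }
  destruct (Rep_ok I (STEP M) y) with (n := S k) (N := 0%nat) (St := S4) as (S5 & HS5 & HI5); auto.
  { intros N St [_ H]; auto. }
  { intros N St w' v Hw [(Lz & Rz & H1 & H2 & H3 & H4 & H5 & H6 & H7 & H8) H9].
    split; [|lk; auto]. exists Lz, Rz.
    split; [lk; auto|]. split; [lk; auto|]. split; [lk; auto|]. split; [auto|]. split; [auto|].
    split; [auto|]. split; [auto| apply Decl_upd; auto]. }
  { intros N St [H1 H2]. destruct (step_ok M _ St Hwf H1) as (S' & H3 & H4 & H5). exists S'. split; auto.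
    split. rewrite Nat.add_1_r. simpl. exact H4. rewrite H5 by lia. auto. }
  assert (Hsz : Z.to_nat (zsize y) = (cc + length w + 1)%nat) by (unfold y; rewrite zsize_pow2; lia).
  rewrite Hsz in HI5. rewrite Nat.add_0_l in HI5.
  assert (HtN : (t <= (cc + length w + 1) ^ S k)%nat).
  { eapply Nat.le_trans; [exact Ht|]. replace (cc + length w + 1)%nat with (cc + length w + 1)%nat by lia.
    apply time_bound. }
  destruct HI5 as [HI5 HY5]. rewrite (iter_ge M c0 t _ HtN Hhalt) in HI5.
  set (cf := run M t c0) in *.
  destruct HI5 as (Lz & Rz & HQ5 & HL5 & HR5 & HL0 & HR0 & Hrep5 & Hq5 & HD5).
  set (e := enc_Z (f vs)) in *.
  set (S6 := upd (upd (upd (upd S5 vY (VInt Rz)) vV (VInt 0)) vNG (VInt 0)) vDN (VInt 0)).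
  destruct Hout as [Hout1 Hout2].
  assert (Hdig : forall j, (j < length e)%nat -> digit (Z.of_nat B) Rz j = nth j e 0%nat).
  { intros j Hj. rewrite <- Hout1 by auto. destruct (Hrep5 j) as [H _]. rewrite H. reflexivity. }
  assert (Hend : digit (Z.of_nat B) Rz (length e) = 0%nat).
  { rewrite <- Hout2. destruct (Hrep5 (length e)) as [H _]. rewrite H. reflexivity. }
  assert (Hsym : forall d, In d e -> (1 <= d <= 3)%nat) by apply enc_Z_sym.
  assert (HD6 : DInv B e Rz 0 S6).
  { split; [|split; [|split; [|split]]]; unfold S6.
    - lk. reflexivity.
    - lk. reflexivity.
    - lk. reflexivity.
    - intros _. lk. exact HR5.
    - repeat apply Decl_upd; auto. }
  destruct (dec_loop B HB e Rz HR0 Hdig Hend Hsym S6 HD6 ltac:(unfold S6; lk; reflexivity)) as (S7 & HS7 & HI7).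
  pose proof (len_le_size B HB e Rz HR0 Hdig Hend Hsym) as Hlen.
  destruct HI7 as (_ & HV7 & HNG7 & _ & HD7).
  rewrite firstn_all2 in HV7, HNG7 by lia.
  set (S8 := upd S7 vOUT (VInt (fst (dec e)))).
  assert (Hres : decres (dec e) = f vs) by apply dec_enc.
  destruct (snd (dec e)) eqn:Hneg.
  - exists (upd S8 vOUT (VInt (0 - fst (dec e)))). split.
    + unfold pbody. eapply exseq_app; [exact HS1|]. econstructor; [apply exec_assign; [apply decl_some; [auto|lia]|constructor]|].
      eapply exseq_app; [exact HS3|].
      econstructor. { apply exec_assign; [apply decl_some; [auto|lia]|constructor]. }
      econstructor. { apply exec_assign; [apply decl_some; [apply Decl_upd; auto|lia]|constructor]. }
      econstructor. { apply exec_assign; [apply decl_some; [repeat apply Decl_upd; auto|lia]|]. apply ev_var. lk. exact HP3. }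
      econstructor. { exact HS5. }
      econstructor. { apply exec_assign; [apply decl_some; [repeat apply Decl_upd; auto|lia]|]. apply ev_var. exact HR5. }
      econstructor. { apply exec_assign; [apply decl_some; [repeat apply Decl_upd; auto|lia]|constructor]. }
      econstructor. { apply exec_assign; [apply decl_some; [repeat apply Decl_upd; auto|lia]|constructor]. }
      econstructor. { apply exec_assign; [apply decl_some; [repeat apply Decl_upd; auto|lia]|constructor]. }
      econstructor. { exact HS7. }
      econstructor. { apply exec_assign; [apply decl_some; [repeat apply Decl_upd; auto|lia]|]. apply ev_var. exact HV7. }
      econstructor. { apply X_IfT. eapply ev_eqb; [apply ev_var; unfold S8; lk; exact HNG7|constructor|reflexivity].
                      apply exec_assign; [apply decl_some; [repeat apply Decl_upd; auto|lia]|].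
                      eapply ev_sub; [constructor|apply ev_var; unfold S8; lk; exact HV7|reflexivity]. }
      constructor.
    + apply ev_var. lk. unfold decres in Hres. rewrite Hneg in Hres. f_equal. f_equal. lia.
  - exists S8. split.
    + unfold pbody. eapply exseq_app; [exact HS1|]. econstructor; [apply exec_assign; [apply decl_some; [auto|lia]|constructor]|].
      eapply exseq_app; [exact HS3|].
      econstructor. { apply exec_assign; [apply decl_some; [auto|lia]|constructor]. }
      econstructor. { apply exec_assign; [apply decl_some; [apply Decl_upd; auto|lia]|constructor]. }
      econstructor. { apply exec_assign; [apply decl_some; [repeat apply Decl_upd; auto|lia]|]. apply ev_var. lk. exact HP3. }
      econstructor. { exact HS5. }
      econstructor. { apply exec_assign; [apply decl_some; [repeat apply Decl_upd; auto|lia]|]. apply ev_var. exact HR5. }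
      econstructor. { apply exec_assign; [apply decl_some; [repeat apply Decl_upd; auto|lia]|constructor]. }
      econstructor. { apply exec_assign; [apply decl_some; [repeat apply Decl_upd; auto|lia]|constructor]. }
      econstructor. { apply exec_assign; [apply decl_some; [repeat apply Decl_upd; auto|lia]|constructor]. }
      econstructor. { exact HS7. }
      econstructor. { apply exec_assign; [apply decl_some; [repeat apply Decl_upd; auto|lia]|]. apply ev_var. exact HV7. }
      econstructor. { apply X_IfF. eapply ev_eqb; [apply ev_var; unfold S8; lk; exact HNG7|constructor|reflexivity].
                      apply skip_ok. }
      constructor.
    + apply ev_var. unfold S8. lk. unfold decres in Hres. rewrite Hneg in Hres. rewrite Hres. reflexivity.
Qed.

Definition TyE (G : tenv) := (forall v, (v < 11)%nat -> G v = Some TInt) /\ G vY = Some TIint.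

Lemma TyE_upd G w t : (12 <= w)%nat -> TyE G -> TyE (upd G w t).
Proof. intros Hw [H1 H2]. split. intros v Hv. rewrite upd_neq by lia. auto. rewrite upd_neq by lia. auto. Qed.

Lemma ity_v G v : TyE G -> (v < 11)%nat -> ity G (EVar v).
Proof. intros [H _] Hv. eapply ity_var; [apply H; auto|right; auto]. Qed.

Ltac ty := repeat first
  [ apply ity_add | apply ity_sub | apply ity_div | apply ity_mod | apply ity_mulc | apply ity_num
  | apply bty_eq | apply bty_lt | apply bty_and
  | (apply ity_v; [assumption|lia]) ].

Ltac sty := repeat first
  [ apply sty_skip
  | (apply sty_block; repeat constructor)
  | apply sty_if
  | (apply bty_eq; ty) | (apply bty_lt; ty) | (apply bty_and; ty)
  | (apply sty_assign; [match goal with H : TyE _ |- _ => apply (proj1 H); lia end | ty]) ].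

Lemma STEP_ty M G : TyE G -> stmt_ty G true (STEP M) G.
Proof. intros HG. unfold STEP. apply sty_block. constructor; [sty|constructor; [|constructor]].
  generalize (list_prod (seq 0 (nstates M)) (seq 0 (nsymbols M))). intros l.
  induction l as [|[q a] l IH]; simpl; [sty|].
  apply sty_if; [ty|  |exact IH].
  unfold action. destruct (delta M q a) as [[[q' a'] d]|]; [|sty].
  apply sty_block. destruct d; simpl; repeat constructor; sty.
Qed.

Lemma Rep_ty n body : (forall G, TyE G -> stmt_ty G true body G) ->
  forall G, TyE G -> (forall j, (j < n)%nat -> G (20 + j)%nat = None) -> stmt_ty G true (Rep n body) G.
Proof. intros Hb. induction n; intros G HG Hf; simpl; auto.
  eapply sty_for; [apply (proj2 HG)|apply Hf; lia|]. apply IHn.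
  - apply TyE_upd; [lia|auto].
  - intros j Hj. rewrite upd_neq by lia. apply Hf. lia.
Qed.

Lemma RepS_ty k body l G : (forall G, TyE G -> stmt_ty G true body G) -> TyE G ->
  (forall j, (j <= k)%nat -> G (20 + j)%nat = None) -> stmt_ty G l (Rep (S k) body) G.
Proof. intros Hb HG Hf. simpl. eapply sty_for; [apply (proj2 HG)|apply Hf; lia|]. apply Rep_ty; auto.
  - apply TyE_upd; [lia|auto].
  - intros j Hj. rewrite upd_neq by lia. apply Hf. lia.
Qed.

Lemma EBODY_ty B G : TyE G -> stmt_ty G true (EBODY B) G.
Proof. intros. unfold EBODY. sty. Qed.
Lemma PUSH_ty B s G l : TyE G -> stmt_ty G l (PUSH B s) G.
Proof. intros. unfold PUSH. sty. Qed.
Lemma DEC_ty B G : TyE G -> stmt_ty G true (DECBODY B) G.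
Proof. intros. unfold DECBODY. sty. Qed.

Lemma ENC_ty B G x : TyE G -> G x = Some TInt -> G 20%nat = None -> Forall (fun s => stmt_ty G false s G) (ENC B x).
Proof. intros HG Hx H20. unfold ENC.
  assert (ity G (EVar x)) by (eapply ity_var; [exact Hx|right; auto]).
  repeat constructor.
  - apply sty_assign_i; [apply (proj2 HG)|auto].
  - apply sty_assign; [apply (proj1 HG); lia|auto].
  - apply sty_if; [ty; auto|apply sty_assign; [apply (proj1 HG); lia|ty; auto]|sty].
  - eapply sty_for; [apply (proj2 HG)|exact H20|]. apply EBODY_ty. apply TyE_upd; [lia|auto].
  - apply sty_if; [ty; auto|apply PUSH_ty; auto|sty].
  - apply sty_if; [ty; auto|apply PUSH_ty; auto|sty].
Qed.

Lemma encs_ty B G xs : TyE G -> (forall x, In x xs -> G x = Some TInt) -> G 20%nat = None ->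
  Forall (fun s => stmt_ty G false s G) (encs B xs).
Proof. intros HG Hx H20. induction xs as [|x xs IH]; simpl; [constructor|].
  destruct xs as [|x' xs'].
  - apply ENC_ty; auto. apply Hx; simpl; auto.
  - apply Forall_app. split.
    + apply IH. intros; apply Hx; simpl; auto.
    + constructor; [apply PUSH_ty; auto|]. apply ENC_ty; auto. apply Hx; simpl; auto.
Qed.

Lemma seqty_app G l s1 G1 s2 G2 : seq_ty G l s1 G1 -> seq_ty G1 l s2 G2 -> seq_ty G l (s1 ++ s2) G2.
Proof. induction 1; simpl; auto. intros. econstructor; eauto. Qed.

Lemma fl_look l (G : tenv) x : fold_left (fun G v => upd G v TInt) l G x = if in_dec Nat.eq_dec x l then Some TInt else G x.
Proof. revert G. induction l as [|a l IH]; intros G; simpl; auto.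
  rewrite IH. destruct (in_dec Nat.eq_dec x l); destruct (Nat.eq_dec a x); subst; try tauto.
  - unfold upd. rewrite Nat.eqb_refl. auto.
  - rewrite upd_neq; auto.
Qed.

Lemma decls_ty_aux l G : NoDup l -> (forall v, In v l -> G v = None) ->
  seq_ty G false (map (fun v => SDecl TInt v) l) (fold_left (fun G v => upd G v TInt) l G).
Proof. revert G. induction l as [|a l IH]; intros G Hnd Hn; simpl; [constructor|].
  inversion Hnd; subst. econstructor.
  - constructor. apply Hn; simpl; auto. intros [_ H]; discriminate.
  - apply IH; auto. intros v Hv. rewrite upd_neq by (intro; subst; tauto). apply Hn; simpl; auto.
Qed.

Lemma init_env_look xs x : init_env xs x = if in_dec Nat.eq_dec x xs then Some TInt else None.
Proof. induction xs as [|a xs IH]; [reflexivity|]. change (init_env (a::xs)) with (upd (init_env xs) a TInt).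
  unfold upd. destruct (Nat.eqb_spec x a).
  - subst. destruct (in_dec Nat.eq_dec a (a::xs)) as [|n]; [reflexivity|exfalso; apply n; left; auto].
  - rewrite IH. destruct (in_dec Nat.eq_dec x xs) as [i|n0]; destruct (in_dec Nat.eq_dec x (a::xs)) as [i'|n1]; auto.
    + exfalso. apply n1. right. auto.
    + exfalso. destruct i' as [->|]; auto.
Qed.

Lemma prog_wt M cc k m : well_typed (prog M cc k m).
Proof.
  set (G0 := init_env (seq (PB k) m)).
  set (G1 := fold_left (fun G v => upd G v TInt) (seq 0 11) G0).
  set (Gd := upd G1 vY TIint).
  assert (HG0 : forall v, (v < PB k)%nat -> G0 v = None).
  { intros v Hv. unfold G0. rewrite init_env_look. destruct (in_dec _ _ _) as [H|]; auto. apply in_seq in H. lia. }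
  assert (HGd : TyE Gd).
  { split.
    - intros v Hv. unfold Gd. rewrite upd_neq by lia. unfold G1. rewrite fl_look.
      destruct (in_dec _ _ _) as [|H]; auto. exfalso. apply H. apply in_seq. lia.
    - unfold Gd. apply upd_eq. }
  assert (HGx : forall x, In x (seq (PB k) m) -> Gd x = Some TInt).
  { intros x Hx. pose proof Hx as Hx'. apply in_seq in Hx'. unfold PB in Hx'. unfold Gd. rewrite upd_neq by lia. unfold G1. rewrite fl_look.
    destruct (in_dec _ _ _) as [|H]; auto. unfold G0. rewrite init_env_look.
    destruct (in_dec _ _ _); tauto. }
  assert (HGf : forall j, (j <= k)%nat -> Gd (20 + j)%nat = None).
  { intros j Hj. unfold Gd. rewrite upd_neq by lia. unfold G1. rewrite fl_look.
    destruct (in_dec _ _ _) as [H|]. apply in_seq in H. lia. apply HG0. unfold PB. lia. }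
  split; [apply seq_NoDup|]. exists Gd. split.
  - cbn [body prog]. unfold pbody. eapply seqty_app.
    { unfold decls. eapply seqty_app.
      - apply decls_ty_aux. apply seq_NoDup. intros v Hv. apply in_seq in Hv. apply HG0. unfold PB. lia.
      - econstructor; [|constructor]. constructor.
        + fold G0 G1. unfold G1. rewrite fl_look. destruct (in_dec _ _ _) as [H|]. apply in_seq in H; lia.
          apply HG0. unfold PB. lia.
        + intros [H _]; discriminate. }
    fold G0 G1 Gd. apply seq_same. apply Forall_app. split.
    { constructor; [|constructor]. apply sty_assign; [apply (proj1 HGd); lia|apply ity_num]. }
    apply Forall_app. split.
    { apply encs_ty; auto. replace 20%nat with (20 + 0)%nat by lia. apply HGf. lia. }
    repeat constructor.
    + apply sty_assign; [apply (proj1 HGd); lia|apply ity_num].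
    + apply sty_assign; [apply (proj1 HGd); lia|apply ity_num].
    + apply sty_assign_i; [apply (proj2 HGd)|apply ity_v; [auto|lia]].
    + apply RepS_ty; auto. apply STEP_ty.
    + apply sty_assign_i; [apply (proj2 HGd)|apply ity_v; [auto|lia]].
    + apply sty_assign; [apply (proj1 HGd); lia|apply ity_num].
    + apply sty_assign; [apply (proj1 HGd); lia|apply ity_num].
    + apply sty_assign; [apply (proj1 HGd); lia|apply ity_num].
    + eapply sty_for; [apply (proj2 HGd)|replace 20%nat with (20 + 0)%nat by lia; apply HGf; lia|].
      apply DEC_ty. apply TyE_upd; [lia|auto].
    + apply sty_assign; [apply (proj1 HGd); lia|apply ity_v; [auto|lia]].
    + apply sty_if; [apply bty_eq; [apply ity_v; [auto|lia]|apply ity_num]| |apply sty_skip].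
      apply sty_assign; [apply (proj1 HGd); lia|apply ity_sub; [apply ity_num|apply ity_v; [auto|lia]]].
  - exists TInt. split; [|right; auto]. constructor. apply (proj1 HGd). lia.
Qed.


Theorem theorem4 : forall (m : nat) (f : list Z -> Z), in_FP m f -> in_FPC m f.
Proof.
  intros m f (M & c & k & Hwf & H).
  exists (prog M c k m). split.
  - apply prog_wt.
  - apply prog_ok; [exact Hwf|]. intros vs Hl. destruct (H vs Hl) as (t & Ht & Hs & Ho).
    exists t. repeat split; auto. apply Ho. apply Ho.
Qed.
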